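(* Assume the standing setup, fix $\omega\in\Omega$ and $(\hat x_0,\hat y_0)\in\mathbb{R}^n\times\mathbb{R}^m$, and let $\eta>0$ with $b<\eta<a$ satisfy $\rho:=\frac{K}{a-\eta}+\frac{K}{\eta-b}<1$. Then for every $u_0\in\mathbb{R}^n$ the integral system $$u(t)=e^{At+\int_0^t z(\theta_\tau\omega)d\tau}u_0+\int_0^t e^{A(t-s)+\int_s^t z(\theta_\tau\omega)d\tau}\Delta F(u(s),v(s),\theta_s\omega)\,ds,\quad v(t)=\int_{-\infty}^t e^{B(t-s)+\int_s^t z(\theta_\tau\omega)d\tau}\Delta G(u(s),v(s),\theta_s\omega)\,ds,\quad t\le 0,$$ has a unique solution $\phi(\cdot)=\phi(\cdot,\omega,(\hat x_0,\hat y_0);u_0)=(u,v)$ in $C^-_\eta$.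
   Context: Standing setup: $1<\alpha<2$; $\Omega$ is a $\{\theta_t\}$-invariant full-measure set of càdlàg paths $\omega:\mathbb{R}\to\mathbb{R}$ ($\omega(0)=0$) of a two-sided scalar symmetric $\alpha$-stable Lévy motion, with $\theta_t\omega=\omega(\cdot+t)-\omega(t)$, on which $z(\omega)=-\int_{-\infty}^0e^\tau\omega(\tau)d\tau$ exists, $t\mapsto z(\theta_t\omega)$ is càdlàg, $\lim_{t\to\pm\infty}|z(\theta_t\omega)|/|t|=0$ and $\lim_{t\to\pm\infty}\frac1t\int_0^tz(\theta_\tau\omega)d\tau=0$. (A1) $A$ is a real $n\times n$ matrix and $B$ a real $m\times m$ matrix with $|e^{At}x|\le e^{at}|x|$ for $t\le0$ and $|e^{Bt}y|\le e^{bt}|y|$ for $t\ge 0$, where $b<0<a$. (A2) $f:\mathbb{R}^n\times\mathbb{R}^m\to\mathbb{R}^n$, $g:\mathbb{R}^n\times\mathbb{R}^m\to\mathbb{R}^m$ satisfy $f(0,0)=0$, $g(0,0)=0$, $|f(x_1,y_1)-f(x_2,y_2)|\le K(|x_1-x_2|+|y_1-y_2|)$ and the same for $g$. Put $F(x,y,\omega)=e^{-z(\omega)}f(e^{z(\omega)}x,e^{z(\omega)}y)$, $G(x,y,\omega)=e^{-z(\omega)}g(e^{z(\omega)}x,e^{z(\omega)}y)$. The random system (RDE) is $\frac{d\hat x}{dt}=A\hat x+F(\hat x,\hat y,\theta_t\omega)+z(\theta_t\omega)\hat x$, $\frac{d\hat y}{dt}=B\hat y+G(\hat x,\hat y,\theta_t\omega)+z(\theta_t\omega)\hat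 y$; $\varphi(t,\omega,(\hat x_0,\hat y_0))=(\hat x(t),\hat y(t))$ denotes its (Carathéodory) solution, defined for all $t\in\mathbb{R}$, with $(\hat x(0),\hat y(0))=(\hat x_0,\hat y_0)$. $|\cdot|$ is the Euclidean norm. For fixed $\omega$ and $\eta\in\mathbb{R}$, $C^-_\eta$ is the Banach space of continuous $\phi=(u,v):(-\infty,0]\to\mathbb{R}^n\times\mathbb{R}^m$ with $\|\phi\|_{C^-_\eta}=\sup_{t\le0}e^{-\eta t-\int_0^tz(\theta_\tau\omega)d\tau}|u(t)|+\sup_{t\le0}e^{-\eta t-\int_0^tz(\theta_\tau\omega)d\tau}|v(t)|<\infty$. Given a base point $(\hat x_0,\hat y_0)$ with orbit $(\hat x(t),\hat y(t))=\varphi(t,\omega,(\hat x_0,\hat y_0))$, define $\Delta F(u,v,\theta_t\omega)=F(u+\hat x(t),v+\hat y(t),\theta_t\omega)-F(\hat x(t),\hat y(t),\theta_t\omega)$ and $\Delta G$ analogously with $G$. *)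

(* Defs.v *)
From Stdlib Require Import Reals Lra ClassicalEpsilon.
From Stdlib Require Fin.
Open Scope R_scope.

Definition vec (n : nat) := Fin.t n -> R.
Definition mat (n : nat) := Fin.t n -> Fin.t n -> R.

Fixpoint fsum (n : nat) : (Fin.t n -> R) -> R :=
  match n return (Fin.t n -> R) -> R with
  | O => fun _ => 0
  | S k => fun f => f Fin.F1 + fsum k (fun i => f (Fin.FS i))
  end.

Definition vzero {n} : vec n := fun _ => 0.
Definition vadd {n} (x y : vec n) : vec n := fun i => x i + y i.
Definition vsub {n} (x y : vec n) : vec n := fun i => x i - y i.
Definition vscale {n} (c : R) (x : vec n) : vec n := fun i => c * x i.
Definition vnorm {n} (x : vec n) : R := sqrt (fsum n (fun i => (x i) ^ 2)).

Definition mvmul {n} (A : mat n) (x : vec n) : vec n :=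
  fun i => fsum n (fun j => A i j * x j).
Definition mmul {n} (A B : mat n) : mat n :=
  fun i j => fsum n (fun k => A i k * B k j).
Definition mid {n} : mat n :=
  fun i j => if Fin.eq_dec i j then 1 else 0.
Fixpoint mpow {n} (A : mat n) (k : nat) : mat n :=
  match k with O => mid | S k' => mmul A (mpow A k') end.

(* Matrix exponential e^{At} = sum_k t^k A^k / k!  (entrywise limit of the
   partial sums; the series always converges, so this picks its sum). *)
Definition mexp {n} (A : mat n) (t : R) : mat n :=
  fun i j => epsilon (inhabits 0)
    (fun l => Un_cv (fun N => sum_f_R0 (fun k => t ^ k / INR (Factorial.fact k) * mpow A k i j) N) l).

Definition has_RInt (f : R -> R) (a b I : R) : Prop :=
  exists pr : Riemann_integrable f a b, RiemannInt pr = I.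
(* The value of the Riemann integral (meaningful when f is integrable). *)
Definition RInt (f : R -> R) (a b : R) : R :=
  epsilon (inhabits 0) (has_RInt f a b).
Definition vhas_RInt {n} (g : R -> vec n) (a b : R) (I : vec n) : Prop :=
  forall i, has_RInt (fun s => g s i) a b (I i).
Definition has_improper_lower (f : R -> R) (t l : R) : Prop :=
  (forall T, T <= t -> inhabited (Riemann_integrable f T t)) /\
  (forall eps, 0 < eps -> exists M, forall T, T <= M ->
      Rabs (RInt f T t - l) < eps).

(* ---------- The noise path t |-> z(theta_t omega) ---------- *)
Definition cadlag (zeta : R -> R) : Prop :=
  forall t,
    (forall eps, 0 < eps -> exists d, 0 < d /\
        forall s, t <= s < t + d -> Rabs (zeta s - zeta t) < eps) /\
    (exists l, forall eps, 0 < eps -> exists d, 0 < d /\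
        forall s, t - d < s < t -> Rabs (zeta s - l) < eps).

Definition sublinear (zeta : R -> R) : Prop :=
  forall eps, 0 < eps -> exists M, 0 < M /\
    forall t, M <= Rabs t -> Rabs (zeta t) / Rabs t < eps.

Definition zero_mean (zeta : R -> R) : Prop :=
  forall eps, 0 < eps -> exists M, 0 < M /\
    forall t, M <= Rabs t -> Rabs (RInt zeta 0 t / t) < eps.

Definition lipschitz {n m p} (h : vec n -> vec m -> vec p) (K : R) : Prop :=
  forall x1 y1 x2 y2,
    vnorm (vsub (h x1 y1) (h x2 y2)) <= K * (vnorm (vsub x1 x2) + vnorm (vsub y1 y2)).

Definition Ftr {n m p} (h : vec n -> vec m -> vec p) (zeta : R -> R)
  (x : vec n) (y : vec m) (t : R) : vec p :=
  vscale (exp (- zeta t)) (h (vscale (exp (zeta t)) x) (vscale (exp (zeta t)) y)).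

(* (xh, yh) is the (Caratheodory) solution of the RDE through (x0,y0) at time 0,
   defined for all t, written in integral form. *)
Definition RDE_solution {n m} (A : mat n) (B : mat m)
  (f : vec n -> vec m -> vec n) (g : vec n -> vec m -> vec m) (zeta : R -> R)
  (x0 : vec n) (y0 : vec m) (xh : R -> vec n) (yh : R -> vec m) : Prop :=
  forall t,
    vhas_RInt (fun s => vadd (vadd (mvmul A (xh s)) (Ftr f zeta (xh s) (yh s) s))
                             (vscale (zeta s) (xh s))) 0 t (vsub (xh t) x0) /\
    vhas_RInt (fun s => vadd (vadd (mvmul B (yh s)) (Ftr g zeta (xh s) (yh s) s))
                             (vscale (zeta s) (yh s))) 0 t (vsub (yh t) y0).

Definition DeltaF {n m p} (h : vec n -> vec m -> vec p) (zeta : R -> R)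
  (xh : R -> vec n) (yh : R -> vec m) (u : vec n) (v : vec m) (t : R) : vec p :=
  vsub (Ftr h zeta (vadd u (xh t)) (vadd v (yh t)) t) (Ftr h zeta (xh t) (yh t) t).

Definition cminus_weight (zeta : R -> R) (eta t : R) : R :=
  exp (- eta * t - RInt zeta 0 t).

Definition cont_neg {n} (u : R -> vec n) : Prop :=
  forall t, t <= 0 -> forall eps, 0 < eps -> exists d, 0 < d /\
    forall s, s <= 0 -> Rabs (s - t) < d -> vnorm (vsub (u s) (u t)) < eps.

Definition in_Cminus {n m} (zeta : R -> R) (eta : R) (u : R -> vec n) (v : R -> vec m) : Prop :=
  cont_neg u /\ cont_neg v /\
  (exists M, forall t, t <= 0 -> cminus_weight zeta eta t * vnorm (u t) <= M) /\
  (exists M, forall t, t <= 0 -> cminus_weight zeta eta t * vnorm (v t) <= M).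

Definition solves_IS {n m} (A : mat n) (B : mat m)
  (f : vec n -> vec m -> vec n) (g : vec n -> vec m -> vec m) (zeta : R -> R)
  (xh : R -> vec n) (yh : R -> vec m) (u0 : vec n)
  (u : R -> vec n) (v : R -> vec m) : Prop :=
  forall t, t <= 0 ->
    (exists I : vec n,
        vhas_RInt (fun s => vscale (exp (RInt zeta s t))
                    (mvmul (mexp A (t - s)) (DeltaF f zeta xh yh (u s) (v s) s))) 0 t I /\
        u t = vadd (vscale (exp (RInt zeta 0 t)) (mvmul (mexp A t) u0)) I) /\
    (forall i, has_improper_lower
        (fun s => vscale (exp (RInt zeta s t))
                    (mvmul (mexp B (t - s)) (DeltaF g zeta xh yh (u s) (v s) s)) i)
        t (v t i)).

(* Main.v *)
Require Import Defs.
From Stdlib Require Import Reals.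
Open Scope R_scope.
From Stdlib Require Import Lra Lia ClassicalEpsilon FunctionalExtensionality.
From Coquelicot Require Import Coquelicot.
Open Scope R_scope.

Lemma fsum_ext n (f g : Fin.t n -> R) : (forall i, f i = g i) -> fsum n f = fsum n g.
Proof. induction n; simpl; intros H; auto. rewrite H, (IHn (fun i => f (Fin.FS i)) (fun i => g (Fin.FS i))); auto. Qed.

Lemma fsum_plus n (f g : Fin.t n -> R) : fsum n (fun i => f i + g i) = fsum n f + fsum n g.
Proof. induction n; simpl. lra. rewrite (IHn (fun i => f (Fin.FS i)) (fun i => g (Fin.FS i))). lra. Qed.

Lemma fsum_scal n (c : R) (f : Fin.t n -> R) : fsum n (fun i => c * f i) = c * fsum n f.
Proof. induction n; simpl. lra. rewrite (IHn (fun i => f (Fin.FS i))). lra. Qed.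

Lemma fsum_zero n : fsum n (fun _ => 0) = 0.
Proof. induction n; simpl; auto. rewrite IHn; lra. Qed.

Lemma fsum_le n (f g : Fin.t n -> R) : (forall i, f i <= g i) -> fsum n f <= fsum n g.
Proof. induction n; simpl; intros H. lra. specialize (IHn (fun i => f (Fin.FS i)) (fun i => g (Fin.FS i))). pose proof (H Fin.F1). assert (fsum n (fun i => f (Fin.FS i)) <= fsum n (fun i => g (Fin.FS i))) by auto. lra. Qed.

Lemma fsum_nonneg n (f : Fin.t n -> R) : (forall i, 0 <= f i) -> 0 <= fsum n f.
Proof. intros H. rewrite <- (fsum_zero n). apply fsum_le. auto. Qed.

Lemma fsum_abs n (f : Fin.t n -> R) : Rabs (fsum n f) <= fsum n (fun i => Rabs (f i)).
Proof. induction n; simpl. rewrite Rabs_R0; lra.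
  eapply Rle_trans. apply Rabs_triang. specialize (IHn (fun i => f (Fin.FS i))). lra. Qed.

Lemma fsum_ge_term n (f : Fin.t n -> R) i : (forall j, 0 <= f j) -> f i <= fsum n f.
Proof. induction n. inversion i.
  intros H. simpl. revert f H. pattern i. apply Fin.caseS'.
  - intros f H. pose proof (fsum_nonneg n (fun i => f (Fin.FS i)) (fun j => H (Fin.FS j))). lra.
  - intros p f H. pose proof (IHn (fun i => f (Fin.FS i)) p (fun j => H (Fin.FS j))). pose proof (H Fin.F1). simpl in *. lra. Qed.

Lemma fsum_swap n m (f : Fin.t n -> Fin.t m -> R) :
  fsum n (fun i => fsum m (fun j => f i j)) = fsum m (fun j => fsum n (fun i => f i j)).
Proof. revert m f. induction n; intros m f; simpl.
  - rewrite fsum_zero; auto.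
  - rewrite IHn. rewrite <- fsum_plus. auto. Qed.

Lemma fsum_sumf n (f : Fin.t n -> nat -> R) N :
  fsum n (fun i => sum_f_R0 (fun k => f i k) N) = sum_f_R0 (fun k => fsum n (fun i => f i k)) N.
Proof. induction N; simpl. auto. rewrite fsum_plus. rewrite IHN. auto. Qed.

Lemma fsum_delta n (i : Fin.t n) (g : Fin.t n -> R) :
  fsum n (fun k => (if Fin.eq_dec i k then 1 else 0) * g k) = g i.
Proof. induction n. inversion i. revert g. pattern i. apply Fin.caseS'.
  - intros g. simpl. destruct (Fin.eq_dec Fin.F1 Fin.F1) as [_|C]; [|congruence].
    rewrite (fsum_ext _ _ (fun _ => 0)). rewrite fsum_zero. lra.
    intros k. destruct (Fin.eq_dec Fin.F1 (Fin.FS k)) as [C|_]. inversion C. lra.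
  - intros p g. simpl. destruct (Fin.eq_dec (Fin.FS p) Fin.F1) as [C|_]. inversion C.
    rewrite <- (IHn p (fun k => g (Fin.FS k))). rewrite Rmult_0_l, Rplus_0_l. apply fsum_ext.
    intros k. destruct (Fin.eq_dec (Fin.FS p) (Fin.FS k)) as [E|E]; destruct (Fin.eq_dec p k) as [E'|E']; auto.
    + apply Fin.FS_inj in E. contradiction.
    + subst. contradiction. Qed.

Lemma fsum_sq_nonneg n (x : vec n) : 0 <= fsum n (fun i => x i ^ 2).
Proof. apply fsum_nonneg. intros; apply pow2_ge_0. Qed.

Lemma vnorm_ge0 n (x : vec n) : 0 <= vnorm x.
Proof. apply sqrt_pos. Qed.

Lemma vnorm_sq n (x : vec n) : vnorm x * vnorm x = fsum n (fun i => x i ^ 2).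
Proof. unfold vnorm. apply sqrt_sqrt. apply fsum_sq_nonneg. Qed.

Lemma comp_le_vnorm n (x : vec n) i : Rabs (x i) <= vnorm x.
Proof. unfold vnorm. rewrite <- sqrt_Rsqr_abs. apply sqrt_le_1_alt.
  unfold Rsqr. replace (x i * x i) with (x i ^ 2) by ring. apply (fsum_ge_term n (fun i => x i ^ 2)).
  intros; apply pow2_ge_0. Qed.

Lemma vnorm_le_sum n (x : vec n) : vnorm x <= fsum n (fun i => Rabs (x i)).
Proof. unfold vnorm. assert (H0 : 0 <= fsum n (fun i => Rabs (x i))) by (apply fsum_nonneg; intros; apply Rabs_pos).
  rewrite <- (sqrt_Rsqr _ H0). apply sqrt_le_1_alt. unfold Rsqr.
  clear H0. induction n; simpl. lra.
  specialize (IHn (fun i => x (Fin.FS i))). simpl in IHn.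
  assert (0 <= Rabs (x Fin.F1) * fsum n (fun i => Rabs (x (Fin.FS i)))).
  { apply Rmult_le_pos. apply Rabs_pos. apply fsum_nonneg; intros; apply Rabs_pos. }
  assert (x Fin.F1 ^ 2 = Rabs (x Fin.F1) * Rabs (x Fin.F1)). { rewrite <- Rabs_mult. rewrite Rabs_right. ring. nra. }
  nra. Qed.

Lemma vnorm_scale n c (x : vec n) : vnorm (vscale c x) = Rabs c * vnorm x.
Proof. unfold vnorm, vscale. rewrite (fsum_ext _ _ (fun i => c ^ 2 * x i ^ 2)) by (intros; ring).
  rewrite fsum_scal. rewrite sqrt_mult. rewrite <- sqrt_Rsqr_abs. unfold Rsqr. f_equal. f_equal. ring.
  apply pow2_ge_0. apply fsum_sq_nonneg. Qed.

Lemma vnorm_zero_iff n (x : vec n) : vnorm x = 0 -> forall i, x i = 0.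
Proof. intros H i. pose proof (comp_le_vnorm n x i). pose proof (Rabs_pos (x i)). rewrite H in *.
  destruct (Req_dec (x i) 0) as [E|E]; auto. pose proof (Rabs_pos_lt (x i) E). lra. Qed.

Lemma CS n (x y : vec n) : fsum n (fun i => x i * y i) <= vnorm x * vnorm y.
Proof.
  destruct (Req_dec (vnorm x) 0) as [Hx|Hx].
  { rewrite (fsum_ext _ _ (fun _ => 0)). rewrite fsum_zero. rewrite Hx. lra.
    intros i. rewrite (vnorm_zero_iff n x Hx i). ring. }
  destruct (Req_dec (vnorm y) 0) as [Hy|Hy].
  { rewrite (fsum_ext _ _ (fun _ => 0)). rewrite fsum_zero. rewrite Hy. lra.
    intros i. rewrite (vnorm_zero_iff n y Hy i). ring. }
  pose proof (vnorm_ge0 n x). pose proof (vnorm_ge0 n y).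
  set (a := vnorm x) in *. set (b := vnorm y) in *.
  assert (HH : 0 <= fsum n (fun i => (b * x i - a * y i) ^ 2)) by (apply fsum_nonneg; intros; apply pow2_ge_0).
  rewrite (fsum_ext _ _ (fun i => b^2 * x i ^2 + (- 2 * a * b) * (x i * y i) + a ^ 2 * y i ^ 2)) in HH by (intros; ring).
  rewrite !fsum_plus, !fsum_scal in HH.
  rewrite <- (vnorm_sq n x), <- (vnorm_sq n y) in HH. fold a b in HH.
  assert (0 < a * b) by (apply Rmult_lt_0_compat; lra).
  nra. Qed.

Lemma vnorm_triang n (x y : vec n) : vnorm (vadd x y) <= vnorm x + vnorm y.
Proof. pose proof (vnorm_ge0 n x). pose proof (vnorm_ge0 n y). pose proof (vnorm_ge0 n (vadd x y)).
  apply Rsqr_incr_0_var; [|lra]. unfold Rsqr. rewrite vnorm_sq.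
  unfold vadd. rewrite (fsum_ext _ _ (fun i => x i ^ 2 + 2 * (x i * y i) + y i ^ 2)) by (intros; ring).
  rewrite !fsum_plus, fsum_scal. rewrite <- vnorm_sq, <- vnorm_sq. pose proof (CS n x y). nra. Qed.

Lemma vnorm_sub_sym n (x y : vec n) : vnorm (vsub x y) = vnorm (vsub y x).
Proof. unfold vnorm, vsub. f_equal. apply fsum_ext. intros; ring. Qed.

Lemma vnorm_sub_triang n (x y z : vec n) : vnorm (vsub x z) <= vnorm (vsub x y) + vnorm (vsub y z).
Proof. eapply Rle_trans; [|apply vnorm_triang]. unfold vnorm, vsub, vadd. right. f_equal. apply fsum_ext. intros; ring. Qed.

Section Mexp.
Variable n : nat.
Variable A : mat n.

Lemma mpow_add p q i j : mpow A (p + q) i j = mmul (mpow A p) (mpow A q) i j.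
Proof. revert i j. induction p; intros i j; simpl.
  - unfold mmul, mid. rewrite fsum_delta. auto.
  - unfold mmul at 1. rewrite (fsum_ext _ _ (fun k => A i k * fsum n (fun l => mpow A p k l * mpow A q l j))) by (intros; rewrite IHp; auto).
    unfold mmul. rewrite (fsum_ext _ _ (fun k => fsum n (fun l => A i k * mpow A p k l * mpow A q l j))).
    2:{ intros k. rewrite <- fsum_scal. apply fsum_ext. intros; ring. }
    rewrite fsum_swap. apply fsum_ext. intros l. rewrite Rmult_comm, <- fsum_scal. apply fsum_ext. intros; ring. Qed.

Definition alpha := fsum n (fun i => fsum n (fun j => Rabs (A i j))).

Lemma alpha_ge0 : 0 <= alpha.
Proof. apply fsum_nonneg; intros; apply fsum_nonneg; intros; apply Rabs_pos. Qed.

Lemma row_le_alpha i : fsum n (fun j => Rabs (A i j)) <= alpha.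
Proof. apply (fsum_ge_term n (fun i => fsum n (fun j => Rabs (A i j)))). intros; apply fsum_nonneg; intros; apply Rabs_pos. Qed.

Lemma mpow_bound k i j : Rabs (mpow A k i j) <= alpha ^ k.
Proof. revert i j. induction k; intros i j; simpl.
  - unfold mid. destruct (Fin.eq_dec i j); rewrite ?Rabs_R1, ?Rabs_R0; lra.
  - unfold mmul. eapply Rle_trans. apply fsum_abs.
    eapply Rle_trans. apply (fsum_le _ _ (fun l => Rabs (A i l) * alpha ^ k)).
    intros l. rewrite Rabs_mult. apply Rmult_le_compat_l. apply Rabs_pos. auto.
    rewrite (fsum_ext _ _ (fun l => alpha ^ k * Rabs (A i l))) by (intros; ring). rewrite fsum_scal.
    rewrite Rmult_comm. apply Rmult_le_compat_r. apply pow_le, alpha_ge0. apply row_le_alpha. Qed.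

End Mexp.

Lemma pow_fact_le_exp x k : 0 <= x -> x ^ k / INR (Factorial.fact k) <= exp x.
Proof. intros Hx. eapply Rle_trans; [|apply (exp_ge_taylor x k Hx)].
  destruct k. simpl. right; reflexivity. rewrite tech5.
  assert (0 <= sum_f_R0 (fun k0 : nat => x ^ k0 / INR (Factorial.fact k0)) k).
  { apply cond_pos_sum. intros. apply Rmult_le_pos. apply pow_le; auto. left; apply Rinv_0_lt_compat, INR_fact_lt_0. }
  lra. Qed.

Definition mterm {n} (A : mat n) (t : R) i j k := t ^ k / INR (Factorial.fact k) * mpow A k i j.

Lemma mterm_bound {n} (A : mat n) t i j k : Rabs (mterm A t i j k) <= (Rabs t * alpha n A) ^ k / INR (Factorial.fact k).
Proof. unfold mterm. rewrite Rabs_mult. unfold Rdiv. rewrite Rabs_mult, <- RPow_abs.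
  rewrite (Rabs_right (/ _)). 2: left; apply Rinv_0_lt_compat, INR_fact_lt_0.
  rewrite Rpow_mult_distr. pose proof (mpow_bound n A k i j).
  assert (0 <= / INR (Factorial.fact k)) by (left; apply Rinv_0_lt_compat, INR_fact_lt_0).
  assert (0 <= Rabs t ^ k) by (apply pow_le, Rabs_pos).
  replace (Rabs t ^ k * alpha n A ^ k * / INR (Factorial.fact k)) with (Rabs t ^ k * / INR (Factorial.fact k) * alpha n A ^ k) by ring.
  apply Rmult_le_compat_l; auto. apply Rmult_le_pos; auto. Qed.

Lemma ex_series_expo x : ex_series (fun k => x ^ k / INR (Factorial.fact k)).
Proof. exists (exp x). pose proof (is_exp_Reals x). unfold is_pseries in H.
  eapply is_series_ext; [|exact H]. intros k. simpl. unfold scal; simpl. unfold mult; simpl. rewrite pow_n_pow. unfold Rdiv; ring. Qed.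

Lemma mterm_abs_series {n} (A : mat n) t i j : ex_series (fun k => Rabs (mterm A t i j k)).
Proof. eapply (@ex_series_le R_AbsRing R_CompleteNormedModule); [|apply ex_series_expo]. intros k. unfold norm; simpl. unfold abs; simpl.
  rewrite Rabs_Rabsolu. apply mterm_bound. Qed.

Lemma mexp_is_series {n} (A : mat n) t i j : is_series (mterm A t i j) (mexp A t i j).
Proof.
  assert (E : ex_series (mterm A t i j)).
  { apply ex_series_Rabs. apply mterm_abs_series. }
  destruct E as [l Hl].
  assert (Hu : Un_cv (fun N => sum_f_R0 (fun k => t ^ k / INR (Factorial.fact k) * mpow A k i j) N) l).
  { apply is_series_Reals in Hl. exact Hl. }
  unfold mexp. pose proof (epsilon_spec (inhabits 0) (fun l => Un_cv (fun N => sum_f_R0 (fun k => t ^ k / INR (Factorial.fact k) * mpow A k i j) N) l) (ex_intro _ l Hu)) as Hs.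
  cbv beta in Hs. rewrite (UL_sequence _ _ _ Hs Hu). exact Hl. Qed.

Lemma is_series_zero : is_series (fun _ : nat => 0) 0.
Proof. apply is_series_Reals. intros eps He. exists 0%nat. intros k _. rewrite sum_cte. unfold Rdist.
  rewrite Rmult_0_l, Rminus_0_r, Rabs_R0. lra. Qed.

Lemma is_series_fsum m (c : Fin.t m -> nat -> R) (L : Fin.t m -> R) :
  (forall l, is_series (c l) (L l)) -> is_series (fun N => fsum m (fun l => c l N)) (fsum m L).
Proof. induction m; intros H; simpl.
  - apply is_series_zero.
  - apply (is_series_plus (c Fin.F1) (fun N => fsum m (fun l => c (Fin.FS l) N))). auto.
    apply (IHm (fun l => c (Fin.FS l)) (fun l => L (Fin.FS l))). auto. Qed.

Lemma binom_fact t s N : (t + s) ^ N / INR (Factorial.fact N) =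
  sum_f_R0 (fun k => t ^ k / INR (Factorial.fact k) * (s ^ (N - k) / INR (Factorial.fact (N - k)))) N.
Proof. rewrite binomial. unfold Rdiv. rewrite Rmult_comm, scal_sum. apply sum_eq. intros k Hk.
  unfold Binomial.C. pose proof (INR_fact_neq_0 N). pose proof (INR_fact_neq_0 k). pose proof (INR_fact_neq_0 (N - k)).
  field. auto. Qed.

Lemma mexp_add {n} (A : mat n) t s i j : mexp A (t + s) i j = fsum n (fun l => mexp A t i l * mexp A s l j).
Proof.
  assert (H : forall l, is_series (fun N => sum_f_R0 (fun k => mterm A t i l k * mterm A s l j (N - k)%nat) N) (mexp A t i l * mexp A s l j)).
  { intros l. apply is_series_mult. apply mexp_is_series. apply mexp_is_series. apply mterm_abs_series. apply mterm_abs_series. }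
  pose proof (is_series_fsum n _ _ H) as H2.
  apply is_series_unique in H2. rewrite <- H2. symmetry. apply is_series_unique.
  eapply is_series_ext; [|apply (mexp_is_series A (t + s) i j)].
  intros N. rewrite fsum_sumf. unfold mterm at 1. rewrite binom_fact. rewrite Rmult_comm, scal_sum. apply sum_eq. intros k Hk.
  unfold mterm. rewrite (fsum_ext _ _ (fun l => (t ^ k / INR (Factorial.fact k) * (s ^ (N - k) / INR (Factorial.fact (N - k)))) * (mpow A k i l * mpow A (N - k) l j))) by (intros; ring).
  rewrite fsum_scal. f_equal. replace N with (k + (N - k))%nat at 1 by lia. rewrite mpow_add. reflexivity. Qed.

Lemma mvmul_mexp_split {n} (A : mat n) t s x i :
  mvmul (mexp A (t - s)) x i = mvmul (mexp A t) (mvmul (mexp A (- s)) x) i.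
Proof. unfold mvmul. unfold Rminus. rewrite (fsum_ext _ _ (fun j => fsum n (fun l => mexp A t i l * mexp A (- s) l j * x j))).
  2:{ intros j. rewrite mexp_add. rewrite (Rmult_comm _ (x j)), <- fsum_scal. apply fsum_ext; intros; ring. }
  rewrite fsum_swap. apply fsum_ext. intros l. rewrite <- fsum_scal. apply fsum_ext; intros; ring. Qed.

Definition mcoef {n} (A : mat n) i j k := mpow A k i j / INR (Factorial.fact k).

Lemma mexp_cont {n} (A : mat n) i j t : continuity_pt (fun t => mexp A t i j) t.
Proof.
  pose proof (eq_refl (mcoef A i j)) as Ec. revert Ec. generalize (mcoef A i j) at 2. intros c Ec.
  assert (Hr : forall t, Rbar_lt (Rabs t) (CV_radius c)).
  { intros t0. pose proof (CV_radius_bounded c) as [Hub _].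
    eapply Rbar_lt_le_trans; [|apply (Hub (Rabs t0 + 1))]. simpl; lra.
    exists (exp (Rabs (Rabs t0 + 1) * alpha n A)). intros k.
    assert (Eq : c k * (Rabs t0 + 1) ^ k = mterm A (Rabs t0 + 1) i j k). { subst c. unfold mcoef, mterm. unfold Rdiv. ring. }
    rewrite Eq.
    eapply Rle_trans. apply mterm_bound. apply pow_fact_le_exp. apply Rmult_le_pos; [apply Rabs_pos|apply alpha_ge0]. }
  assert (E : (fun t => mexp A t i j) = PSeries c).
  { apply functional_extensionality. intros x. unfold PSeries. symmetry. apply is_series_unique.
    eapply is_series_ext; [|apply mexp_is_series]. intros k. subst c. change (mterm A x i j k = mcoef A i j k * x ^ k). unfold mterm, mcoef. unfold Rdiv; ring. }
  rewrite E. apply PSeries_continuity. apply Hr. Qed.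

Lemma approx_RInt (h : R -> R) a b : a <= b ->
  (forall eps, 0 < eps -> exists g, ex_RInt g a b /\ forall t, a <= t <= b -> Rabs (h t - g t) <= eps) ->
  ex_RInt h a b.
Proof.
  intros Hab H. apply ex_RInt_Reals_1. intros eps.
  assert (He' : 0 < eps / (2 * (b - a + 1))).
  { apply Rdiv_lt_0_compat. destruct eps; simpl; auto. lra. }
  destruct (constructive_indefinite_description _ (H _ He')) as [g [Hg Hhg]].
  pose proof (ex_RInt_Reals_0 _ _ _ Hg) as pr.
  assert (He2 : 0 < eps / 2) by (destruct eps; simpl; lra).
  destruct (pr (mkposreal _ He2)) as [phi [psi [Hp1 Hp2]]].
  exists phi.
  set (c := mkStepFun (StepFun_P4 a b 1)).
  exists (mkStepFun (StepFun_P28 (eps / (2 * (b - a + 1))) psi c)).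
  split.
  - intros t Ht. simpl. unfold fct_cte. rewrite Rmin_left, Rmax_right in Ht by lra.
    replace (h t - phi t) with ((h t - g t) + (g t - phi t)) by ring.
    eapply Rle_trans. apply Rabs_triang. specialize (Hhg t Ht).
    specialize (Hp1 t). rewrite Rmin_left, Rmax_right in Hp1 by lra. specialize (Hp1 Ht). lra.
  - rewrite StepFun_P30. unfold c. rewrite StepFun_P18. simpl in Hp2.
    eapply Rle_lt_trans. apply Rabs_triang. rewrite Rabs_mult, (Rabs_right (eps / _)) by lra.
    rewrite Rabs_mult, Rabs_R1, (Rabs_right (b - a)) by lra.
    assert (eps / (2 * (b - a + 1)) * (1 * (b - a)) < eps / 2).
    { apply Rmult_lt_reg_r with (2 * (b - a + 1)). lra. field_simplify; try lra. }
    lra. Qed.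

Definition RL (h : R -> R) t l := forall eps, 0 < eps -> exists d, 0 < d /\ forall s, t < s < t + d -> Rabs (h s - l) < eps.
Definition LL (h : R -> R) t l := forall eps, 0 < eps -> exists d, 0 < d /\ forall s, t - d < s < t -> Rabs (h s - l) < eps.
Definition cdl (h : R -> R) := forall t, RL h t (h t) /\ exists l, LL h t l.

Lemma cdl_RInt_le h a b : cdl h -> a <= b -> ex_RInt h a b.
Proof.
  intros Hh Hab. apply approx_RInt; auto. intros eps Heps.
  set (S := fun x => a <= x <= b /\ exists g, ex_RInt g a x /\ forall t, a <= t <= x -> Rabs (h t - g t) <= eps).
  assert (Sa : S a).
  { split. lra. exists h. split. apply ex_RInt_point. intros. rewrite Rminus_diag, Rabs_R0. lra. }
  assert (Sb : bound S). { exists b. intros x [Hx _]. lra. }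
  destruct (completeness S Sb (ex_intro _ a Sa)) as [s [Hub Hlub]].
  assert (Has : a <= s) by (apply Hub; auto).
  assert (Hsb : s <= b) by (apply Hlub; intros x [Hx _]; lra).
  assert (Ss : S s).
  { destruct (Req_dec s a) as [E|E]. subst; auto.
    destruct (Hh s) as [_ [l Hl]]. destruct (Hl eps Heps) as [d1 [Hd1 Hl1]].
    assert (exists x, S x /\ Rmax a (s - d1) < x).
    { apply NNPP. intros C. assert (s <= Rmax a (s - d1)).
      { apply Hlub. intros x Sx. apply Rnot_lt_le. intros C2. apply C. exists x. auto. }
      unfold Rmax in H. destruct (Rle_dec a (s - d1)); lra. }
    destruct H as [x [[Hx [g [Hg Hhg]]] Hxm]].
    assert (Hxs : x <= s) by (apply Hub; split; auto; exists g; auto).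
    assert (Hax : a <= x) by lra.
    split. lra.
    exists (fun t => if Rle_dec t x then g t else if Rlt_dec t s then l else h s). split.
    - apply ex_RInt_Chasles with x.
      + eapply ex_RInt_ext; [|exact Hg]. intros t Ht. rewrite Rmin_left, Rmax_right in Ht by lra.
        destruct (Rle_dec t x); auto. lra.
      + eapply ex_RInt_ext; [|apply (ex_RInt_const x s l)]. intros t Ht. rewrite Rmin_left, Rmax_right in Ht by lra.
        destruct (Rle_dec t x). lra. destruct (Rlt_dec t s). auto. lra.
    - intros t Ht. destruct (Rle_dec t x). apply Hhg; lra.
      destruct (Rlt_dec t s). left. apply Hl1. unfold Rmax in Hxm. destruct (Rle_dec a (s - d1)); lra.
      replace t with s by lra. rewrite Rminus_diag, Rabs_R0. lra. }
  destruct (Req_dec s b) as [E|E]. { subst. destruct Ss as [_ H]. exact H. }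
  exfalso. destruct Ss as [_ [g [Hg Hhg]]].
  destruct (Hh s) as [Hr _]. destruct (Hr eps Heps) as [d2 [Hd2 Hr2]].
  set (y := Rmin b (s + d2 / 2)).
  assert (Hy1 : s < y) by (unfold y, Rmin; destruct (Rle_dec b (s + d2/2)); lra).
  assert (Hy2 : y <= b) by (unfold y; apply Rmin_l).
  assert (Hy3 : y <= s + d2 / 2) by (unfold y; apply Rmin_r).
  assert (S y).
  { split. lra. exists (fun t => if Rle_dec t s then g t else h s). split.
    - apply ex_RInt_Chasles with s.
      + eapply ex_RInt_ext; [|exact Hg]. intros t Ht. rewrite Rmin_left, Rmax_right in Ht by lra.
        destruct (Rle_dec t s); auto. lra.
      + eapply ex_RInt_ext; [|apply (ex_RInt_const s y (h s))]. intros t Ht. rewrite Rmin_left, Rmax_right in Ht by lra.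
        destruct (Rle_dec t s). lra. auto.
    - intros t Ht. destruct (Rle_dec t s). apply Hhg; lra. left. apply Hr2. lra. }
  pose proof (Hub y H). lra.
Qed.

Lemma cdl_RInt h a b : cdl h -> ex_RInt h a b.
Proof. intros Hh. destruct (Rle_dec a b). apply cdl_RInt_le; auto. apply ex_RInt_swap. apply cdl_RInt_le; auto. lra. Qed.

Definition ctn (f : R -> R) t := forall eps, 0 < eps -> exists d, 0 < d /\ forall s, Rabs (s - t) < d -> Rabs (f s - f t) < eps.

Lemma cpt_ctn f t : continuity_pt f t -> ctn f t.
Proof. intros H eps He. destruct (H eps He) as [d [Hd Hf]]. exists d. split; auto. intros s Hs.
  destruct (Req_dec s t). subst. rewrite Rminus_diag, Rabs_R0; auto.
  apply (Hf s). split. split. exact I. auto. exact Hs. Qed.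

Definition Lm (P : R -> R -> Prop) (h : R -> R) l :=
  forall eps, 0 < eps -> exists d, 0 < d /\ forall s, P d s -> Rabs (h s - l) < eps.
Definition good (P : R -> R -> Prop) t :=
  (forall d d' s, d <= d' -> P d s -> P d' s) /\ (forall d s, P d s -> Rabs (s - t) < d).

Definition sideR t := fun d s => t < s < t + d.
Definition sideL t := fun d s => t - d < s < t.
Lemma good_R t : good (sideR t) t.
Proof. split; unfold sideR; intros. lra. rewrite Rabs_right; lra. Qed.
Lemma good_L t : good (sideL t) t.
Proof. split; unfold sideL; intros. lra. rewrite Rabs_left; lra. Qed.

Section LmAlg.
Variable P : R -> R -> Prop.
Variable t : R.
Hypothesis HP : good P t.

Lemma Lm_min (Q1 Q2 : R -> Prop) : (exists d, 0 < d /\ forall s, P d s -> Q1 s) -> (exists d, 0 < d /\ forall s, P d s -> Q2 s) ->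
  exists d, 0 < d /\ forall s, P d s -> Q1 s /\ Q2 s.
Proof using P t HP. intros [d1 [H1 G1]] [d2 [H2 G2]]. exists (Rmin d1 d2). split. apply Rmin_pos; auto.
  intros s Hs. destruct HP as [Hm _]. split. apply G1. eapply Hm; [|exact Hs]. apply Rmin_l. apply G2. eapply Hm; [|exact Hs]. apply Rmin_r. Qed.

Lemma Lm_const c : Lm P (fun _ => c) c.
Proof using P t HP. intros eps He. exists 1. split. lra. intros. rewrite Rminus_diag, Rabs_R0. auto. Qed.

Lemma Lm_ctn f : ctn f t -> Lm P f (f t).
Proof using P t HP. intros H eps He. destruct (H eps He) as [d [Hd Hf]]. exists d. split; auto. intros s Hs. apply Hf. destruct HP as [_ Hd2]. apply Hd2. auto. Qed.

Lemma Lm_comp g h l : Lm P h l -> ctn g l -> Lm P (fun s => g (h s)) (g l).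
Proof using P t HP. intros Hh Hg eps He. destruct (Hg eps He) as [d [Hd Hgd]]. destruct (Hh d Hd) as [d' [Hd' Hh']].
  exists d'. split; auto. Qed.

Lemma Lm_plus h1 h2 l1 l2 : Lm P h1 l1 -> Lm P h2 l2 -> Lm P (fun s => h1 s + h2 s) (l1 + l2).
Proof using P t HP. intros H1 H2 eps He. assert (He2 : 0 < eps / 2) by lra.
  destruct (Lm_min _ _ (H1 _ He2) (H2 _ He2)) as [d [Hd G]]. exists d. split; auto. intros s Hs.
  destruct (G s Hs). replace (h1 s + h2 s - (l1 + l2)) with ((h1 s - l1) + (h2 s - l2)) by ring.
  eapply Rle_lt_trans. apply Rabs_triang. lra. Qed.

Lemma Lm_opp h l : Lm P h l -> Lm P (fun s => - h s) (- l).
Proof using P t HP. intros H eps He. destruct (H eps He) as [d [Hd G]]. exists d. split; auto. intros s Hs.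
  replace (- h s - - l) with (- (h s - l)) by ring. rewrite Rabs_Ropp. auto. Qed.

Lemma Lm_minus h1 h2 l1 l2 : Lm P h1 l1 -> Lm P h2 l2 -> Lm P (fun s => h1 s - h2 s) (l1 - l2).
Proof using P t HP. intros. apply Lm_plus; auto. apply Lm_opp; auto. Qed.

Lemma Lm_mult h1 h2 l1 l2 : Lm P h1 l1 -> Lm P h2 l2 -> Lm P (fun s => h1 s * h2 s) (l1 * l2).
Proof using P t HP. intros H1 H2 eps He.
  set (e := Rmin 1 (eps / (Rabs l1 + Rabs l2 + 1))).
  assert (He0 : 0 < e). { unfold e. apply Rmin_pos. lra. apply Rdiv_lt_0_compat; auto. pose proof (Rabs_pos l1); pose proof (Rabs_pos l2); lra. }
  destruct (Lm_min _ _ (H1 _ He0) (H2 _ He0)) as [d [Hd G]]. exists d. split; auto. intros s Hs.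
  destruct (G s Hs) as [G1 G2].
  replace (h1 s * h2 s - l1 * l2) with ((h1 s - l1) * (h2 s - l2) + l1 * (h2 s - l2) + l2 * (h1 s - l1)) by ring.
  assert (e <= 1) by apply Rmin_l. assert (Hee : e * (Rabs l1 + Rabs l2 + 1) <= eps).
  { unfold e. pose proof (Rabs_pos l1); pose proof (Rabs_pos l2).
    apply Rle_trans with (eps / (Rabs l1 + Rabs l2 + 1) * (Rabs l1 + Rabs l2 + 1)).
    apply Rmult_le_compat_r. lra. apply Rmin_r. right; field. lra. }
  pose proof (Rabs_pos l1); pose proof (Rabs_pos l2). pose proof (Rabs_pos (h1 s - l1)); pose proof (Rabs_pos (h2 s - l2)).
  eapply Rle_lt_trans. apply Rabs_triang. eapply Rle_lt_trans. apply Rplus_le_compat_r. apply Rabs_triang.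
  rewrite !Rabs_mult.
  assert (Rabs (h1 s - l1) * Rabs (h2 s - l2) < e) by nra.
  assert (Rabs l1 * Rabs (h2 s - l2) <= Rabs l1 * e) by nra.
  assert (Rabs l2 * Rabs (h1 s - l1) <= Rabs l2 * e) by nra.
  nra. Qed.

Lemma Lm_fsum n (h : Fin.t n -> R -> R) (l : Fin.t n -> R) : (forall i, Lm P (h i) (l i)) ->
  Lm P (fun s => fsum n (fun i => h i s)) (fsum n l).
Proof using P t HP. induction n; intros H; simpl. apply Lm_const.
  apply (Lm_plus (h Fin.F1) (fun s => fsum n (fun i => h (Fin.FS i) s))). auto.
  apply (IHn (fun i => h (Fin.FS i)) (fun i => l (Fin.FS i))). auto. Qed.

Lemma Lm_exp h l : Lm P h l -> Lm P (fun s => exp (h s)) (exp l).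
Proof using P t HP. intros H. apply (Lm_comp exp h l H). apply cpt_ctn. apply derivable_continuous_pt, derivable_pt_exp. Qed.

Lemma Lm_le h l (b : R -> R) : Lm P b 0 -> (forall s, Rabs (h s - l) <= b s) -> Lm P h l.
Proof using P t HP. intros Hb H eps He. destruct (Hb eps He) as [d [Hd G]]. exists d. split; auto. intros s Hs.
  specialize (G s Hs). rewrite Rminus_0_r in G. eapply Rle_lt_trans; [apply H|]. eapply Rle_lt_trans; [apply Rle_abs|]. auto. Qed.

Definition Lmv {n} (x : R -> vec n) (L : vec n) := forall i, Lm P (fun s => x s i) (L i).

Lemma Lm_vnorm n (x : R -> vec n) L : Lmv x L -> Lm P (fun s => vnorm (vsub (x s) L)) 0.
Proof using P t HP. intros H. apply Lm_le with (b := fun s => fsum n (fun i => Rabs (x s i - L i))).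
  - rewrite <- (fsum_zero n). apply Lm_fsum. intros i. rewrite <- Rabs_R0. apply (Lm_comp Rabs (fun s => x s i - L i) 0).
    replace 0 with (L i - L i) by ring. apply Lm_minus. apply H. apply Lm_const.
    apply cpt_ctn. apply Rcontinuity_abs.
  - intros s. rewrite Rminus_0_r, Rabs_right by (apply Rle_ge, vnorm_ge0). apply vnorm_le_sum. Qed.

Lemma Lmv_lip n m p (h : vec n -> vec m -> vec p) K x y L M : lipschitz h K -> Lmv x L -> Lmv y M ->
  Lmv (fun s => h (x s) (y s)) (h L M).
Proof using P t HP. intros Hh Hx Hy j. apply Lm_le with (b := fun s => Rabs K * (vnorm (vsub (x s) L) + vnorm (vsub (y s) M))).
  - replace 0 with (Rabs K * (0 + 0)) by ring. apply Lm_mult. apply Lm_const. apply Lm_plus; apply Lm_vnorm; auto.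
  - intros s. eapply Rle_trans. apply (comp_le_vnorm p (vsub (h (x s) (y s)) (h L M)) j).
    eapply Rle_trans. apply Hh. apply Rmult_le_compat_r. pose proof (vnorm_ge0 _ (vsub (x s) L)); pose proof (vnorm_ge0 _ (vsub (y s) M)); lra.
    apply Rle_abs. Qed.

Lemma Lmv_scale n c (x : R -> vec n) lc L : Lm P c lc -> Lmv x L -> Lmv (fun s => vscale (c s) (x s)) (vscale lc L).
Proof using P t HP. intros Hc Hx i. unfold vscale. apply Lm_mult; auto. Qed.

Lemma Lmv_add n (x y : R -> vec n) L M : Lmv x L -> Lmv y M -> Lmv (fun s => vadd (x s) (y s)) (vadd L M).
Proof using P t HP. intros Hx Hy i. unfold vadd. apply Lm_plus; auto. Qed.

Lemma Lmv_sub n (x y : R -> vec n) L M : Lmv x L -> Lmv y M -> Lmv (fun s => vsub (x s) (y s)) (vsub L M).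
Proof using P t HP. intros Hx Hy i. unfold vsub. apply Lm_minus; auto. Qed.

Lemma Lmv_Ftr n m p (h : vec n -> vec m -> vec p) K zeta lz (X : R -> vec n) (Y : R -> vec m) LX LY :
  lipschitz h K -> Lm P zeta lz -> Lmv X LX -> Lmv Y LY ->
  Lmv (fun s => Ftr h zeta (X s) (Y s) s) (Ftr h (fun _ => lz) LX LY t).
Proof using P t HP. intros Hh Hz HX HY. unfold Ftr. apply Lmv_scale. apply Lm_exp. apply Lm_opp. auto.
  apply (Lmv_lip _ _ _ h K). auto. apply Lmv_scale; auto. apply Lm_exp; auto. apply Lmv_scale; auto. apply Lm_exp; auto. Qed.

Lemma Lmv_mvmul n (E : R -> mat n) (LE : mat n) x L : (forall i j, Lm P (fun s => E s i j) (LE i j)) -> Lmv x L ->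
  Lmv (fun s => mvmul (E s) (x s)) (mvmul LE L).
Proof using P t HP. intros HE Hx i. unfold mvmul. apply (Lm_fsum n (fun j s => E s i j * x s j)). intros j. apply Lm_mult; auto. Qed.

End LmAlg.

Lemma is_has (f : R -> R) a b I : is_RInt f a b I -> has_RInt f a b I.
Proof. intros H. assert (E : ex_RInt f a b) by (exists I; auto).
  exists (ex_RInt_Reals_0 _ _ _ E). rewrite <- RInt_Reals. apply is_RInt_unique; auto. Qed.

Lemma has_is (f : R -> R) a b I : has_RInt f a b I -> is_RInt f a b I.
Proof. intros [pr Hpr]. pose proof (ex_RInt_Reals_1 _ _ _ pr) as E. rewrite <- Hpr, <- RInt_Reals. apply (RInt_correct (V:=R_CompleteNormedModule)); auto. Qed.

Lemma DRInt_eq (f : R -> R) a b : ex_RInt f a b -> Defs.RInt f a b = RInt f a b.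
Proof. intros E. unfold Defs.RInt. assert (H : has_RInt f a b (RInt f a b)) by (apply is_has, (RInt_correct (V:=R_CompleteNormedModule)), E).
  pose proof (epsilon_spec (inhabits 0) (has_RInt f a b) (ex_intro _ _ H)) as H2.
  apply has_is in H2. apply (is_RInt_unique (V:=R_CompleteNormedModule)) in H2. rewrite <- H2. reflexivity. Qed.

Lemma RInt_Chasles_R (f : R -> R) a b c : ex_RInt f a b -> ex_RInt f b c -> @eq R (RInt f a c) (RInt f a b + RInt f b c).
Proof. intros. rewrite <- (RInt_Chasles f a b c); auto. Qed.

Lemma RInt_swap_R (f : R -> R) a b : ex_RInt f a b -> @eq R (RInt f b a) (- RInt f a b).
Proof. intros E. rewrite <- (opp_RInt_swap f a b E). reflexivity. Qed.

Lemma ex_RInt_any (G : R -> R) : (forall T, ex_RInt G 0 T) -> forall x y, ex_RInt G x y.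
Proof. intros H x y. apply ex_RInt_Chasles with 0. apply ex_RInt_swap; auto. auto. Qed.

Lemma prim_ctn (G : R -> R) t : (forall T, ex_RInt G 0 T) -> ctn (fun T => RInt G 0 T) t.
Proof. intros H. pose proof (ex_RInt_any G H) as HA.
  destruct (ex_RInt_ub G (t - 1) (t + 1) (HA _ _)) as [M HM].
  intros eps He. assert (HM0 : 0 < Rabs M + 1) by (pose proof (Rabs_pos M); lra).
  exists (Rmin 1 (eps / (Rabs M + 1))). split. apply Rmin_pos. lra. apply Rdiv_lt_0_compat; lra.
  intros s Hs. pose proof (Rmin_l 1 (eps / (Rabs M + 1))). pose proof (Rmin_r 1 (eps / (Rabs M + 1))).
  rewrite (RInt_Chasles_R G 0 t s) by auto. unfold Rminus. rewrite Rplus_comm, <- Rplus_assoc, Rplus_opp_l, Rplus_0_l.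
  assert (Hb : forall x, Rmin t s <= x <= Rmax t s -> Rabs (G x) <= Rabs M).
  { intros x Hx. eapply Rle_trans; [|apply Rle_abs]. apply (HM x). rewrite Rmin_left, Rmax_right by lra.
    apply Rabs_def2 in Hs. destruct (Rle_dec t s); [rewrite Rmin_left, Rmax_right in Hx by lra|rewrite Rmin_right, Rmax_left in Hx by lra]; lra. }
  assert (Habs : Rabs (RInt G t s) <= Rabs (s - t) * Rabs M).
  { destruct (Rle_dec t s).
    - rewrite (Rabs_right (s - t)) by lra. apply abs_RInt_le_const; auto. intros x Hx; apply Hb. rewrite Rmin_left, Rmax_right; lra.
    - rewrite RInt_swap_R by auto. rewrite Rabs_Ropp. rewrite (Rabs_left (s - t)) by lra.
      replace (- (s - t)) with (t - s) by ring. apply abs_RInt_le_const; auto. lra. intros; apply Hb. rewrite Rmin_right, Rmax_left; lra. }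
  eapply Rle_lt_trans. exact Habs.
  apply Rle_lt_trans with (eps / (Rabs M + 1) * Rabs M). apply Rmult_le_compat_r. apply Rabs_pos. lra.
  apply Rlt_le_trans with (eps / (Rabs M + 1) * (Rabs M + 1)). apply Rmult_lt_compat_l. apply Rdiv_lt_0_compat; lra. lra.
  right; field. lra. Qed.

Lemma is_RInt_fsum n (h : Fin.t n -> R -> R) (c I : Fin.t n -> R) a b : (forall j, is_RInt (h j) a b (I j)) ->
  is_RInt (fun s => fsum n (fun j => c j * h j s)) a b (fsum n (fun j => c j * I j)).
Proof. induction n; intros H; simpl.
  - pose proof (is_RInt_const (V:=R_NormedModule) a b 0) as H0.
    replace (scal (b - a) (0:R_NormedModule)) with (0:R_NormedModule) in H0 by (unfold scal; simpl; unfold mult; simpl; ring).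
    eapply is_RInt_ext; [|exact H0]. auto.
  - apply (is_RInt_plus (V:=R_NormedModule) (fun s => c Fin.F1 * h Fin.F1 s) (fun s => fsum n (fun j => c (Fin.FS j) * h (Fin.FS j) s))).
    + apply (is_RInt_scal (V:=R_NormedModule) (h Fin.F1)). auto.
    + apply (IHn (fun j => h (Fin.FS j)) (fun j => c (Fin.FS j)) (fun j => I (Fin.FS j))). auto. Qed.

Lemma vint_bound n (gv : R -> vec n) (I : vec n) (h : R -> R) a b : a <= b ->
  (forall i, is_RInt (fun s => gv s i) a b (I i)) -> ex_RInt h a b ->
  (forall s, a < s < b -> vnorm (gv s) <= h s) -> vnorm I <= RInt h a b.
Proof. intros Hab HI Hh Hb.
  destruct (Req_dec (vnorm I) 0) as [E|E].
  { rewrite E. apply RInt_ge_0; auto. intros. eapply Rle_trans; [apply vnorm_ge0|apply Hb]; auto. }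
  pose proof (vnorm_ge0 n I).
  assert (Hsq : vnorm I * vnorm I <= vnorm I * RInt h a b).
  { rewrite vnorm_sq. rewrite (fsum_ext _ _ (fun i => I i * I i)) by (intros; ring).
    pose proof (is_RInt_fsum n (fun j s => gv s j) I I a b HI) as H1. apply (is_RInt_unique (V:=R_CompleteNormedModule)) in H1.
    rewrite <- H1. rewrite <- (RInt_scal (V:=R_CompleteNormedModule)) by auto.
    apply RInt_le; auto. exists (fsum n (fun j => I j * I j)). apply (is_RInt_fsum n (fun j s => gv s j) I I a b HI).
    apply (ex_RInt_scal (V:=R_CompleteNormedModule)); auto.
    intros s Hs. unfold scal; simpl; unfold mult; simpl. eapply Rle_trans. apply (CS n I (gv s)).
    apply Rmult_le_compat_l; auto. }
  apply Rmult_le_reg_l with (vnorm I). lra. auto. Qed.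

Lemma is_RInt_expk k x y : k <> 0 -> is_RInt (fun s => exp (k * s)) x y ((exp (k * y) - exp (k * x)) / k).
Proof. intros Hk. replace ((exp (k * y) - exp (k * x)) / k) with (minus (exp (k * y) / k) (exp (k * x) / k)).
  2:{ unfold minus, plus, opp; simpl. field. auto. }
  apply (is_RInt_derive (V:=R_CompleteNormedModule) (fun s => exp (k * s) / k)).
  - intros s _. auto_derive. auto. field. auto.
  - intros s _. apply (ex_derive_continuous (fun s => exp (k * s))). auto_derive. auto. Qed.


Lemma vnorm_ext n (x y : vec n) : (forall i, x i = y i) -> vnorm x = vnorm y.
Proof. intros H. unfold vnorm. f_equal. apply fsum_ext. intros; rewrite H; auto. Qed.

Lemma ctn_ext f g t : (forall s, f s = g s) -> ctn g t -> ctn f t.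
Proof. intros E H eps He. destruct (H eps He) as [d [Hd G]]. exists d; split; auto. intros s Hs. rewrite !E. auto. Qed.

Lemma ctn_plus_const c F t : ctn F t -> ctn (fun s => c + F s) t.
Proof. intros H eps He. destruct (H eps He) as [d [Hd G]]. exists d; split; auto. intros s Hs.
  replace (c + F s - (c + F t)) with (F s - F t) by ring. auto. Qed.

Lemma fin_min m (Q : Fin.t m -> R -> Prop) :
  (forall i, exists M, forall T, T <= M -> Q i T) -> exists M, forall i T, T <= M -> Q i T.
Proof. induction m; intros H.
  - exists 0. intros i. inversion i.
  - destruct (IHm (fun i => Q (Fin.FS i)) (fun i => H (Fin.FS i))) as [M1 H1].
    destruct (H Fin.F1) as [M2 H2]. exists (Rmin M1 M2). intros i. pattern i. apply Fin.caseS'.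
    + intros T HT. apply H2. pose proof (Rmin_r M1 M2). lra.
    + intros p T HT. apply (H1 p). pose proof (Rmin_l M1 M2). lra. Qed.

Lemma vnorm_le_const n (x : vec n) c : (forall i, Rabs (x i) <= c) -> vnorm x <= INR n * c.
Proof. intros H. eapply Rle_trans. apply vnorm_le_sum. eapply Rle_trans. apply (fsum_le _ _ (fun _ => c)). auto.
  clear. induction n; simpl fsum. simpl; lra. rewrite S_INR. lra. Qed.

Lemma fsum_minus n (f g : Fin.t n -> R) : fsum n (fun i => f i - g i) = fsum n f - fsum n g.
Proof. rewrite (fsum_ext _ _ (fun i => f i + (-1) * g i)) by (intros; ring). rewrite fsum_plus, fsum_scal. ring. Qed.

Lemma mvmul_lin n (E : mat n) x1 x2 c i :
  vscale c (mvmul E x1) i - vscale c (mvmul E x2) i = vscale c (mvmul E (vsub x1 x2)) i.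
Proof. unfold vscale, mvmul, vsub. rewrite (fsum_ext _ (fun j => E i j * (x1 j - x2 j)) (fun j => E i j * x1 j - E i j * x2 j)) by (intros; ring).
  rewrite fsum_minus. ring. Qed.

Lemma Ftr_lip p q r (h : vec p -> vec q -> vec r) Kh z x1 y1 x2 y2 s : lipschitz h Kh ->
  vnorm (vsub (Ftr h z x1 y1 s) (Ftr h z x2 y2 s)) <= Kh * (vnorm (vsub x1 x2) + vnorm (vsub y1 y2)).
Proof. intros Hh. unfold Ftr.
  rewrite (vnorm_ext _ _ (vscale (exp (- z s)) (vsub (h (vscale (exp (z s)) x1) (vscale (exp (z s)) y1)) (h (vscale (exp (z s)) x2) (vscale (exp (z s)) y2))))).
  2:{ intros i. unfold vsub, vscale. ring. }
  rewrite vnorm_scale. rewrite Rabs_right by (left; apply exp_pos).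
  eapply Rle_trans. apply Rmult_le_compat_l. left; apply exp_pos. apply Hh.
  rewrite (vnorm_ext _ (vsub (vscale _ x1) (vscale _ x2)) (vscale (exp (z s)) (vsub x1 x2))) by (intros; unfold vsub, vscale; ring).
  rewrite (vnorm_ext _ (vsub (vscale _ y1) (vscale _ y2)) (vscale (exp (z s)) (vsub y1 y2))) by (intros; unfold vsub, vscale; ring).
  rewrite !vnorm_scale. rewrite Rabs_right by (left; apply exp_pos).
  rewrite exp_Ropp. right. field. apply Rgt_not_eq, exp_pos. Qed.

Lemma DeltaF_lip p q r (h : vec p -> vec q -> vec r) Kh z xh yh u1 v1 u2 v2 s : lipschitz h Kh ->
  vnorm (vsub (DeltaF h z xh yh u1 v1 s) (DeltaF h z xh yh u2 v2 s)) <= Kh * (vnorm (vsub u1 u2) + vnorm (vsub v1 v2)).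
Proof. intros Hh. unfold DeltaF.
  rewrite (vnorm_ext _ _ (vsub (Ftr h z (vadd u1 (xh s)) (vadd v1 (yh s)) s) (Ftr h z (vadd u2 (xh s)) (vadd v2 (yh s)) s))) by (intros; unfold vsub; ring).
  eapply Rle_trans. apply Ftr_lip; eauto.
  rewrite (vnorm_ext _ (vsub (vadd u1 _) _) (vsub u1 u2)) by (intros; unfold vsub, vadd; ring).
  rewrite (vnorm_ext _ (vsub (vadd v1 _) _) (vsub v1 v2)) by (intros; unfold vsub, vadd; ring). lra. Qed.

Definition sideB t := fun d s => Rabs (s - t) < d.
Lemma good_B t : good (sideB t) t.
Proof. split; unfold sideB; intros; lra. Qed.

Lemma gen_cdl zeta p q r (h : vec p -> vec q -> vec r) Kh (M : R -> mat r) (c : R -> R) (X1 X2 : R -> vec p) (Y1 Y2 : R -> vec q) i :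
  cdl zeta -> lipschitz h Kh -> (forall j k t, ctn (fun s => M s j k) t) -> (forall t, ctn c t) ->
  (forall j t, ctn (fun s => X1 s j) t) -> (forall j t, ctn (fun s => X2 s j) t) ->
  (forall j t, ctn (fun s => Y1 s j) t) -> (forall j t, ctn (fun s => Y2 s j) t) ->
  cdl (fun s => vscale (c s) (mvmul (M s) (vsub (Ftr h zeta (X1 s) (Y1 s) s) (Ftr h zeta (X2 s) (Y2 s) s))) i).
Proof. intros Hz Hh HM Hc HX1 HX2 HY1 HY2.
  assert (G : forall P t lz, good P t -> Lm P zeta lz ->
    Lm P (fun s => vscale (c s) (mvmul (M s) (vsub (Ftr h zeta (X1 s) (Y1 s) s) (Ftr h zeta (X2 s) (Y2 s) s))) i)
      (vscale (c t) (mvmul (M t) (vsub (Ftr h (fun _ => lz) (X1 t) (Y1 t) t) (Ftr h (fun _ => lz) (X2 t) (Y2 t) t))) i)).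
  { intros P t lz HP Hl. apply (Lmv_scale P t HP). apply (Lm_ctn P t HP); auto. apply (Lmv_mvmul P t HP); auto.
    intros j k. apply (Lm_ctn P t HP); auto. apply (Lmv_sub P t HP); auto.
    apply (Lmv_Ftr P t HP _ _ _ h Kh); auto; intros j; apply (Lm_ctn P t HP); auto.
    apply (Lmv_Ftr P t HP _ _ _ h Kh); auto; intros j; apply (Lm_ctn P t HP); auto. }
  intros t. destruct (Hz t) as [HR [l HL]]. split.
  - apply (G (sideR t) t (zeta t) (good_R t) HR).
  - exists (vscale (c t) (mvmul (M t) (vsub (Ftr h (fun _ => l) (X1 t) (Y1 t) t) (Ftr h (fun _ => l) (X2 t) (Y2 t) t))) i).
    apply (G (sideL t) t l (good_L t) HL). Qed.

Lemma ctn_exp F t : ctn F t -> ctn (fun s => exp (F s)) t.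
Proof. intros H. apply (Lm_exp (sideB t) t (good_B t) F (F t)). exact H. Qed.

Lemma ctn_id t : ctn (fun s => s) t.
Proof. intros e He; exists e; split; auto. Qed.

Lemma ctn_mexp p (E : mat p) t0 j k t : ctn (fun s => mexp E (t0 - s) j k) t.
Proof. apply (Lm_comp (sideB t) t (good_B t) (fun x => mexp E x j k) (fun s => t0 - s) (t0 - t)).
  apply (Lm_minus (sideB t) t (good_B t) (fun _ => t0) (fun s => s)). apply (Lm_const (sideB t) t (good_B t)). apply ctn_id.
  apply cpt_ctn, mexp_cont. Qed.

Lemma is_RInt_diff_swap (F1 F2 : R -> R) x y J1 J2 : is_RInt F1 y x J1 -> is_RInt F2 y x J2 ->
  is_RInt (fun s => F1 s - F2 s) x y (J2 - J1).
Proof. intros H1 H2. pose proof (is_RInt_minus (V:=R_NormedModule) _ _ _ _ _ _ H1 H2) as H.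
  apply (is_RInt_swap (V:=R_NormedModule)) in H. replace (J2 - J1) with (opp (minus J1 J2)).
  eapply is_RInt_ext; [|exact H]. intros; reflexivity.
  unfold opp, minus, plus; simpl. unfold opp; simpl. ring. Qed.

Lemma is_RInt_minus_R (F1 F2 : R -> R) x y J1 J2 : is_RInt F1 x y J1 -> is_RInt F2 x y J2 ->
  is_RInt (fun s => F1 s - F2 s) x y (J1 - J2).
Proof. intros H1 H2. exact (is_RInt_minus (V:=R_NormedModule) _ _ _ _ _ _ H1 H2). Qed.

Lemma vnorm_split p (x y : vec p) : vnorm x <= vnorm y + vnorm (vsub x y).
Proof. rewrite (vnorm_ext _ x (vadd y (vsub x y))) by (intros; unfold vadd, vsub; ring). apply vnorm_triang. Qed.

Lemma exp_le x y : x <= y -> exp x <= exp y.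
Proof. intros H. destruct (Rle_lt_or_eq_dec _ _ H). left; apply exp_increasing; auto. subst; lra. Qed.

Lemma exp_small c k eps : 0 <= c -> 0 < k -> 0 < eps -> exists M, M <= 0 /\ forall T, T <= M -> c * exp (k * T) < eps.
Proof. intros Hc Hk He. set (e := eps / (2 * (c + 1))). assert (He' : 0 < e) by (unfold e; apply Rdiv_lt_0_compat; lra).
  exists (Rmin 0 (ln e / k)). split. apply Rmin_l. intros T HT.
  assert (H1 : k * T <= ln e).
  { pose proof (Rmin_r 0 (ln e / k)). apply Rmult_le_reg_r with (/ k). apply Rinv_0_lt_compat; auto.
    rewrite (Rmult_comm k), Rmult_assoc, Rinv_r by lra. rewrite Rmult_1_r. unfold Rdiv in H. lra. }
  apply exp_le in H1. rewrite exp_ln in H1 by auto.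
  apply Rle_lt_trans with ((c + 1) * e). apply Rmult_le_compat; try lra. left; apply exp_pos.
  unfold e. replace ((c + 1) * (eps / (2 * (c + 1)))) with (eps / 2) by (field; lra). lra. Qed.

Lemma lim_bound (u : nat -> R) (l : R) c B : is_lim_seq u l -> (exists N, forall k, (N <= k)%nat -> Rabs (u k - c) <= B) -> Rabs (l - c) <= B.
Proof. intros Hl [N HN]. apply is_lim_seq_spec in Hl. apply Rle_plus_epsilon. intros eps He.
  unfold is_lim_seq' in Hl. destruct (Hl (mkposreal eps He)) as [N2 HN2]. specialize (HN2 (max N N2) (Nat.le_max_r _ _)). specialize (HN (max N N2) (Nat.le_max_l _ _)).
  simpl in HN2. replace (l - c) with ((u (max N N2) - c) - (u (max N N2) - l)) by ring.
  eapply Rle_trans. apply Rabs_triang. rewrite Rabs_Ropp. lra. Qed.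

Lemma ext_ctn p (u : R -> vec p) : cont_neg u -> forall j t, ctn (fun s => u (Rmin s 0) j) t.
Proof. intros Hu j t eps He. destruct (Rle_dec t 0) as [Ht|Ht].
  - destruct (Hu t Ht eps He) as [d [Hd G]]. exists d. split; auto. intros s Hs.
    rewrite (Rmin_left t 0 Ht). eapply Rle_lt_trans. apply (comp_le_vnorm _ (vsub (u (Rmin s 0)) (u t)) j).
    apply G. apply Rmin_r. unfold Rmin. destruct (Rle_dec s 0). auto. rewrite Rminus_0_l, Rabs_Ropp, Rabs_left1 by lra.
    apply Rabs_def2 in Hs. lra.
  - exists t. split. lra. intros s Hs. apply Rabs_def2 in Hs. rewrite Rmin_right by lra. rewrite Rmin_right by lra.
    rewrite Rminus_diag, Rabs_R0. auto. Qed.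

Lemma allctn_cont_neg p (u : R -> vec p) : (forall j t, ctn (fun s => u s j) t) -> cont_neg u.
Proof. intros Hu t _ eps He. assert (H : Lm (sideB t) (fun s => vnorm (vsub (u s) (u t))) 0).
  { apply (Lm_vnorm (sideB t) t (good_B t)). intros j. apply Hu. }
  destruct (H eps He) as [d [Hd G]]. exists d. split; auto. intros s _ Hs. specialize (G s Hs).
  rewrite Rminus_0_r in G. eapply Rle_lt_trans; [apply Rle_abs|]; auto. Qed.

Lemma fsum_lin_diff p (c x y : Fin.t p -> R) : fsum p (fun j => c j * x j) - fsum p (fun j => c j * y j) = fsum p (fun j => c j * (x j - y j)).
Proof. rewrite <- fsum_minus. apply fsum_ext. intros; ring. Qed.

Lemma fsum_abs_bound p (c x : Fin.t p -> R) B : (forall j, Rabs (x j) <= B) -> Rabs (fsum p (fun j => c j * x j)) <= fsum p (fun j => Rabs (c j)) * B.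
Proof. intros H. eapply Rle_trans. apply fsum_abs. rewrite Rmult_comm, <- fsum_scal. apply fsum_le. intros j.
  rewrite Rabs_mult, (Rmult_comm B). apply Rmult_le_compat_l. apply Rabs_pos. auto. Qed.

Lemma vadd_vzero p (x : vec p) : vadd vzero x = x.
Proof. apply functional_extensionality. intros i. unfold vadd, vzero. ring. Qed.

Lemma is_RInt_zero x y : is_RInt (fun _ => 0) x y 0.
Proof. pose proof (is_RInt_const (V:=R_NormedModule) x y 0) as H0.
  replace (scal (y - x) (0:R_NormedModule)) with (0:R_NormedModule) in H0 by (unfold scal; simpl; unfold mult; simpl; ring).
  exact H0. Qed.

Lemma tail_bound (h : R -> R) Cb k T1 T2 : 0 <= Cb -> 0 < k -> (forall x y, ex_RInt h x y) ->
  (forall s, s <= 0 -> Rabs (h s) <= Cb * exp (k * s)) -> T1 <= T2 -> T2 <= 0 ->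
  Rabs (RInt h T1 T2) <= Cb * exp (k * T2) / k.
Proof. intros HC Hk Hi Hb H12 H2.
  assert (He : is_RInt (fun s => Cb * exp (k * s)) T1 T2 (Cb * ((exp (k * T2) - exp (k * T1)) / k))).
  { pose proof (is_RInt_expk k T1 T2 ltac:(lra)) as E. exact (is_RInt_scal (V:=R_NormedModule) (fun s => exp (k * s)) T1 T2 Cb _ E). }
  eapply Rle_trans. apply abs_RInt_le; auto.
  eapply Rle_trans. apply RInt_le; [lra | apply (ex_RInt_norm h); auto | eexists; exact He | intros x Hx; apply Hb; lra].
  rewrite (is_RInt_unique (V:=R_CompleteNormedModule) _ _ _ _ He). pose proof (exp_pos (k * T1)).
  replace (Cb * exp (k * T2) / k) with (Cb * (exp (k * T2) / k)) by (unfold Rdiv; ring).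
  apply Rmult_le_compat_l; auto. unfold Rdiv. apply Rmult_le_compat_r. left; apply Rinv_0_lt_compat; lra. lra. Qed.

Lemma improper_limit (h : R -> R) Cb k : 0 <= Cb -> 0 < k -> (forall x y, ex_RInt h x y) ->
  (forall s, s <= 0 -> Rabs (h s) <= Cb * exp (k * s)) ->
  exists L, forall T, T <= 0 -> Rabs (RInt h T 0 - L) <= Cb * exp (k * T) / k.
Proof. intros HC Hk Hi Hb.
  set (a := fun N : nat => RInt h (- INR N) 0).
  assert (Ha : forall p q : nat, (p <= q)%nat -> Rabs (a p - a q) <= Cb * exp (k * (- INR p)) / k).
  { intros p q Hpq. unfold a. pose proof (le_INR _ _ Hpq). pose proof (pos_INR p).
    rewrite (RInt_Chasles_R h (- INR q) (- INR p) 0) by auto.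
    replace (RInt h (- INR p) 0 - (RInt h (- INR q) (- INR p) + RInt h (- INR p) 0)) with (- RInt h (- INR q) (- INR p)) by lra.
    rewrite Rabs_Ropp. apply tail_bound; auto; lra. }
  assert (Hc : ex_lim_seq_cauchy a).
  { intros eps. destruct (exp_small (Cb / k) k eps) as [M [HM0 HM]]. apply Rdiv_le_0_compat; lra. auto. apply cond_pos.
    destruct (INR_unbounded (- M)) as [N HN]. exists N. intros p q Hp Hq.
    assert (Hgen : forall p q : nat, (N <= p)%nat -> (p <= q)%nat -> Rabs (a p - a q) < eps).
    { intros p' q' Hp' Hpq'. eapply Rle_lt_trans. apply Ha; auto.
      replace (Cb * exp (k * - INR p') / k) with (Cb / k * exp (k * - INR p')) by (unfold Rdiv; ring).
      apply HM. pose proof (le_INR _ _ Hp'). lra. }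
    destruct (Nat.le_ge_cases p q). apply Hgen; auto. rewrite Rabs_minus_sym. apply Hgen; auto. }
  apply ex_lim_seq_cauchy_corr in Hc. pose proof (Lim_seq_correct' a Hc) as HL.
  exists (real (Lim_seq a)). intros T HT. rewrite Rabs_minus_sym.
  apply (lim_bound a (real (Lim_seq a)) (RInt h T 0)). exact HL.
  destruct (INR_unbounded (- T)) as [N HN]. exists N. intros p Hp. unfold a.
  pose proof (le_INR _ _ Hp).
  rewrite (RInt_Chasles_R h (- INR p) T 0) by auto.
  replace (RInt h (- INR p) T + RInt h T 0 - RInt h T 0) with (RInt h (- INR p) T) by lra.
  apply tail_bound; auto; lra. Qed.

Lemma small_zero x C rho : 0 <= x -> 0 <= C -> 0 <= rho < 1 -> (forall p, x <= C * rho ^ p) -> x = 0.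
Proof. intros Hx HC Hr H. destruct (Req_dec x 0); auto. exfalso.
  assert (Hx' : 0 < x / (C + 1)) by (apply Rdiv_lt_0_compat; lra).
  destruct (pow_lt_1_zero rho ltac:(rewrite Rabs_right; lra) _ Hx') as [N HN].
  specialize (HN N (Nat.le_refl N)). rewrite Rabs_right in HN by (apply Rle_ge, pow_le; lra).
  specialize (H N). pose proof (pow_le rho N (proj1 Hr)).
  assert (C * rho ^ N <= (C + 1) * rho ^ N) by nra.
  assert ((C + 1) * rho ^ N < (C + 1) * (x / (C + 1))) by (apply Rmult_lt_compat_l; lra).
  replace ((C + 1) * (x / (C + 1))) with x in H3 by (field; lra). lra. Qed.

Lemma geo_cauchy (x : nat -> R) c rho : 0 <= rho < 1 -> 0 <= c -> (forall k, Rabs (x (S k) - x k) <= rho ^ k * c) ->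
  forall p, Rabs (real (Lim_seq x) - x p) <= rho ^ p * c / (1 - rho).
Proof. intros Hr Hc H.
  assert (Hd : forall p d, Rabs (x (p + d)%nat - x p) <= (rho ^ p - rho ^ (p + d)) / (1 - rho) * c).
  { intros p d. induction d.
    - rewrite Nat.add_0_r, Rminus_diag, Rabs_R0, Rminus_diag. unfold Rdiv. rewrite Rmult_0_l, Rmult_0_l. lra.
    - replace (p + S d)%nat with (S (p + d)) by lia.
      replace (x (S (p + d)) - x p) with ((x (S (p + d)) - x (p + d)%nat) + (x (p + d)%nat - x p)) by ring.
      eapply Rle_trans. apply Rabs_triang. eapply Rle_trans. apply Rplus_le_compat. apply H. apply IHd.
      right. simpl pow. field. lra. }
  assert (Hd' : forall p q, (p <= q)%nat -> Rabs (x q - x p) <= rho ^ p * c / (1 - rho)).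
  { intros p q Hpq. replace q with (p + (q - p))%nat by lia. eapply Rle_trans. apply Hd.
    pose proof (pow_le rho (p + (q - p)) (proj1 Hr)).
    replace ((rho ^ p - rho ^ (p + (q - p))) / (1 - rho) * c) with ((rho ^ p - rho ^ (p + (q - p))) * c / (1 - rho)) by (field; lra).
    unfold Rdiv. apply Rmult_le_compat_r. left; apply Rinv_0_lt_compat; lra. nra. }
  assert (Hc2 : ex_lim_seq_cauchy x).
  { intros eps. destruct (Req_dec c 0) as [E|E].
    - exists 0%nat. intros p q Hp Hq. destruct (Nat.le_ge_cases p q) as [L|L].
      + eapply Rle_lt_trans. rewrite Rabs_minus_sym. apply Hd'; auto. rewrite E. unfold Rdiv. rewrite Rmult_0_r, Rmult_0_l. apply cond_pos.
      + eapply Rle_lt_trans. apply Hd'; auto. rewrite E. unfold Rdiv. rewrite Rmult_0_r, Rmult_0_l. apply cond_pos.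
    - assert (He : 0 < eps * (1 - rho) / c) by (apply Rdiv_lt_0_compat; [apply Rmult_lt_0_compat; [apply cond_pos|lra]|lra]).
      destruct (pow_lt_1_zero rho ltac:(rewrite Rabs_right; lra) _ He) as [N HN]. exists N.
      assert (G : forall p q, (N <= p)%nat -> (p <= q)%nat -> Rabs (x q - x p) < eps).
      { intros p q Hp Hpq. eapply Rle_lt_trans. apply Hd'; auto. specialize (HN p Hp).
        rewrite Rabs_right in HN by (apply Rle_ge, pow_le; lra).
        apply Rlt_le_trans with (eps * (1 - rho) / c * c / (1 - rho)).
        unfold Rdiv. apply Rmult_lt_compat_r. apply Rinv_0_lt_compat; lra. apply Rmult_lt_compat_r; lra.
        right. field. lra. }
      intros p q Hp Hq. destruct (Nat.le_ge_cases p q) as [L|L].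
      + rewrite Rabs_minus_sym. apply G; auto.
      + apply G; auto. }
  apply ex_lim_seq_cauchy_corr in Hc2. pose proof (Lim_seq_correct' x Hc2) as HL.
  intros p. apply (lim_bound x (real (Lim_seq x)) (x p)). exact HL.
  exists p. intros k Hk. apply Hd'; auto. Qed.

Lemma vnorm_sub_le p (x y : vec p) : vnorm (vsub x y) <= vnorm x + vnorm y.
Proof. rewrite (vnorm_ext _ _ (vadd x (vscale (-1) y))) by (intros; unfold vsub, vadd, vscale; ring).
  eapply Rle_trans. apply vnorm_triang. rewrite vnorm_scale. replace (Rabs (-1)) with 1 by (rewrite Rabs_left; lra). lra. Qed.

Lemma vec_eq p (x y : vec p) : vnorm (vsub x y) = 0 -> x = y.
Proof. intros H. apply functional_extensionality. intros i. pose proof (vnorm_zero_iff p _ H i). unfold vsub in H0. lra. Qed.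

Section Main.
Variables (n m : nat) (A : mat n) (B : mat m) (a b K : R)
  (f : vec n -> vec m -> vec n) (g : vec n -> vec m -> vec m) (zeta : R -> R).
Hypothesis Hcadlag : cadlag zeta.
Hypothesis Hba : b < 0 < a.
Hypothesis HA : forall t x, t <= 0 -> vnorm (mvmul (mexp A t) x) <= exp (a * t) * vnorm x.
Hypothesis HB : forall t y, 0 <= t -> vnorm (mvmul (mexp B t) y) <= exp (b * t) * vnorm y.
Hypothesis Hflip : lipschitz f K.
Hypothesis Hglip : lipschitz g K.
Variables (x0 : vec n) (y0 : vec m) (xh : R -> vec n) (yh : R -> vec m).
Hypothesis Horbit : RDE_solution A B f g zeta x0 y0 xh yh.
Variable eta : R.
Hypothesis Heta : 0 < eta.
Hypothesis Hbeta : b < eta < a.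
Hypothesis HK : 0 <= K.
Hypothesis Hrho : K / (a - eta) + K / (eta - b) < 1.
Variable u0 : vec n.

Lemma zeta_cdl : cdl zeta.
Proof. intros t. destruct (Hcadlag t) as [H1 [l H2]]. split.
  - intros eps He. destruct (H1 eps He) as [d [Hd G]]. exists d; split; auto. intros s Hs. apply G. lra.
  - exists l. auto. Qed.

Lemma zeta_int x y : ex_RInt zeta x y.
Proof. apply cdl_RInt, zeta_cdl. Qed.

Definition Z0 t := Defs.RInt zeta 0 t.

Lemma Zd_eq x y : Defs.RInt zeta x y = RInt zeta x y.
Proof. apply DRInt_eq, zeta_int. Qed.

Lemma Zchasles s t : Defs.RInt zeta s t = Z0 t - Z0 s.
Proof. unfold Z0. rewrite !Zd_eq. rewrite (RInt_Chasles_R zeta 0 s t) by apply zeta_int. lra. Qed.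

Lemma Z0_ctn t : ctn Z0 t.
Proof. apply ctn_ext with (g := fun T => RInt zeta 0 T). intros; unfold Z0; apply Zd_eq.
  apply prim_ctn. intros; apply zeta_int. Qed.

Lemma xh_ctn i t : ctn (fun s => xh s i) t.
Proof.
  set (G := fun s => vadd (vadd (mvmul A (xh s)) (Ftr f zeta (xh s) (yh s) s)) (vscale (zeta s) (xh s)) i).
  assert (H : forall T, is_RInt G 0 T (xh T i - x0 i)).
  { intros T. destruct (Horbit T) as [H _]. apply has_is. apply (H i). }
  apply ctn_ext with (g := fun T => x0 i + RInt G 0 T).
  { intros s. rewrite (is_RInt_unique (V:=R_CompleteNormedModule) _ _ _ _ (H s)). simpl. ring. }
  apply ctn_plus_const. apply prim_ctn. intros T. exists (xh T i - x0 i). auto. Qed.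

Lemma yh_ctn i t : ctn (fun s => yh s i) t.
Proof.
  set (G := fun s => vadd (vadd (mvmul B (yh s)) (Ftr g zeta (xh s) (yh s) s)) (vscale (zeta s) (yh s)) i).
  assert (H : forall T, is_RInt G 0 T (yh T i - y0 i)).
  { intros T. destruct (Horbit T) as [_ H]. apply has_is. apply (H i). }
  apply ctn_ext with (g := fun T => y0 i + RInt G 0 T).
  { intros s. rewrite (is_RInt_unique (V:=R_CompleteNormedModule) _ _ _ _ (H s)). simpl. ring. }
  apply ctn_plus_const. apply prim_ctn. intros T. exists (yh T i - y0 i). auto. Qed.


Definition IA (u : R -> vec n) (v : R -> vec m) t s :=
  vscale (exp (Defs.RInt zeta s t)) (mvmul (mexp A (t - s)) (DeltaF f zeta xh yh (u s) (v s) s)).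
Definition IB (u : R -> vec n) (v : R -> vec m) t s :=
  vscale (exp (Defs.RInt zeta s t)) (mvmul (mexp B (t - s)) (DeltaF g zeta xh yh (u s) (v s) s)).
Definition SIS (u : R -> vec n) (v : R -> vec m) (u' : R -> vec n) (v' : R -> vec m) :=
  forall t, t <= 0 ->
    (exists I : vec n, vhas_RInt (IA u v t) 0 t I /\
        u' t = vadd (vscale (exp (Defs.RInt zeta 0 t)) (mvmul (mexp A t) u0)) I) /\
    (forall i, has_improper_lower (fun s => IB u v t s i) t (v' t i)).

Lemma SIS_solves u v : SIS u v u v -> solves_IS A B f g zeta xh yh u0 u v.
Proof. intros H. exact H. Qed.

Definition allctn {p} (u : R -> vec p) := forall j t, ctn (fun s => u s j) t.

Lemma allctn_add p (u v : R -> vec p) : allctn u -> allctn v -> allctn (fun s => vadd (u s) (v s)).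
Proof. intros Hu Hv j t. apply (Lm_plus (sideB t) t (good_B t)). apply Hu. apply Hv. Qed.

Lemma c_ctn t0 t : ctn (fun s => exp (Defs.RInt zeta s t0)) t.
Proof. apply ctn_ext with (g := fun s => exp (Z0 t0 - Z0 s)). intros; rewrite Zchasles; auto.
  apply ctn_exp. apply (Lm_minus (sideB t) t (good_B t) (fun _ => Z0 t0) Z0). apply (Lm_const (sideB t) t (good_B t)). apply Z0_ctn. Qed.

Lemma IA_int u v t i x y : allctn u -> allctn v -> ex_RInt (fun s => IA u v t s i) x y.
Proof. intros Hu Hv. apply cdl_RInt. unfold IA, DeltaF.
  apply (gen_cdl zeta n m n f K (fun s => mexp A (t - s)) (fun s => exp (Defs.RInt zeta s t))
     (fun s => vadd (u s) (xh s)) xh (fun s => vadd (v s) (yh s)) yh i zeta_cdl Hflip).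
  intros; apply ctn_mexp. apply c_ctn. apply allctn_add; auto. intros j t0; apply xh_ctn.
  intros j t0; apply xh_ctn. apply allctn_add; auto. intros j t0; apply yh_ctn. intros j t0; apply yh_ctn. Qed.

Lemma IB_int u v t i x y : allctn u -> allctn v -> ex_RInt (fun s => IB u v t s i) x y.
Proof. intros Hu Hv. apply cdl_RInt. unfold IB, DeltaF.
  apply (gen_cdl zeta n m m g K (fun s => mexp B (t - s)) (fun s => exp (Defs.RInt zeta s t))
     (fun s => vadd (u s) (xh s)) xh (fun s => vadd (v s) (yh s)) yh i zeta_cdl Hglip).
  intros; apply ctn_mexp. apply c_ctn. apply allctn_add; auto. intros j t0; apply xh_ctn.
  intros j t0; apply xh_ctn. apply allctn_add; auto. intros j t0; apply yh_ctn. intros j t0; apply yh_ctn. Qed.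

Definition w t := cminus_weight zeta eta t.

Lemma w_pos t : 0 < w t.
Proof. apply exp_pos. Qed.

Lemma w_inv t : w t * exp (eta * t + Z0 t) = 1.
Proof. unfold w, cminus_weight, Z0. rewrite <- exp_plus. replace (- eta * t - Defs.RInt zeta 0 t + (eta * t + Defs.RInt zeta 0 t)) with 0 by ring. apply exp_0. Qed.

Lemma w_bound p (x : vec p) s D : w s * vnorm x <= D -> vnorm x <= D * exp (eta * s + Z0 s).
Proof. intros H. pose proof (w_inv s). pose proof (exp_pos (eta * s + Z0 s)).
  replace (vnorm x) with (w s * vnorm x * exp (eta * s + Z0 s)) by (rewrite Rmult_comm, <- Rmult_assoc, (Rmult_comm _ (w s)), H0; ring).
  apply Rmult_le_compat_r; lra. Qed.


Lemma HA' c t s x : s >= t -> 0 <= c -> vnorm (vscale c (mvmul (mexp A (t - s)) x)) <= c * exp (a * (t - s)) * vnorm x.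
Proof. intros Hs Hc. rewrite vnorm_scale, Rabs_right by lra. rewrite Rmult_assoc. apply Rmult_le_compat_l; auto. apply HA. lra. Qed.

Lemma HB' c t s y : s <= t -> 0 <= c -> vnorm (vscale c (mvmul (mexp B (t - s)) y)) <= c * exp (b * (t - s)) * vnorm y.
Proof. intros Hs Hc. rewrite vnorm_scale, Rabs_right by lra. rewrite Rmult_assoc. apply Rmult_le_compat_l; auto. apply HB. lra. Qed.

Lemma IA_diff u1 v1 u2 v2 Du Dv t s : s <= 0 -> s >= t ->
  w s * vnorm (vsub (u1 s) (u2 s)) <= Du -> w s * vnorm (vsub (v1 s) (v2 s)) <= Dv ->
  vnorm (vsub (IA u1 v1 t s) (IA u2 v2 t s)) <= K * (Du + Dv) * exp (Z0 t) * exp (a * t) * exp ((eta - a) * s).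
Proof. intros Hs0 Hst H1 H2. unfold IA.
  rewrite (vnorm_ext _ _ (vscale (exp (Defs.RInt zeta s t)) (mvmul (mexp A (t - s)) (vsub (DeltaF f zeta xh yh (u1 s) (v1 s) s) (DeltaF f zeta xh yh (u2 s) (v2 s) s))))).
  2:{ intros i. unfold vsub at 1. apply mvmul_lin. }
  eapply Rle_trans. apply HA'. auto. left; apply exp_pos.
  eapply Rle_trans. apply Rmult_le_compat_l. apply Rmult_le_pos; left; apply exp_pos. apply DeltaF_lip. exact Hflip.
  apply w_bound in H1. apply w_bound in H2.
  apply Rle_trans with (exp (Defs.RInt zeta s t) * exp (a * (t - s)) * (K * ((Du + Dv) * exp (eta * s + Z0 s)))).
  { apply Rmult_le_compat_l. apply Rmult_le_pos; left; apply exp_pos. apply Rmult_le_compat_l. auto. lra. }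
  right. rewrite Zchasles. replace (K * (Du + Dv) * exp (Z0 t) * exp (a * t) * exp ((eta - a) * s)) with (K * (Du + Dv) * (exp (Z0 t) * exp (a * t) * exp ((eta - a) * s))) by ring.
  replace (exp (Z0 t - Z0 s) * exp (a * (t - s)) * (K * ((Du + Dv) * exp (eta * s + Z0 s)))) with (K * (Du + Dv) * (exp (Z0 t - Z0 s) * exp (a * (t - s)) * exp (eta * s + Z0 s))) by ring.
  f_equal. rewrite <- !exp_plus. f_equal. ring. Qed.

Lemma IB_diff u1 v1 u2 v2 Du Dv t s : s <= t ->
  w s * vnorm (vsub (u1 s) (u2 s)) <= Du -> w s * vnorm (vsub (v1 s) (v2 s)) <= Dv ->
  vnorm (vsub (IB u1 v1 t s) (IB u2 v2 t s)) <= K * (Du + Dv) * exp (Z0 t) * exp (b * t) * exp ((eta - b) * s).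
Proof. intros Hst H1 H2. unfold IB.
  rewrite (vnorm_ext _ _ (vscale (exp (Defs.RInt zeta s t)) (mvmul (mexp B (t - s)) (vsub (DeltaF g zeta xh yh (u1 s) (v1 s) s) (DeltaF g zeta xh yh (u2 s) (v2 s) s))))).
  2:{ intros i. unfold vsub at 1. apply mvmul_lin. }
  eapply Rle_trans. apply HB'. auto. left; apply exp_pos.
  eapply Rle_trans. apply Rmult_le_compat_l. apply Rmult_le_pos; left; apply exp_pos. apply DeltaF_lip. exact Hglip.
  apply w_bound in H1. apply w_bound in H2.
  apply Rle_trans with (exp (Defs.RInt zeta s t) * exp (b * (t - s)) * (K * ((Du + Dv) * exp (eta * s + Z0 s)))).
  { apply Rmult_le_compat_l. apply Rmult_le_pos; left; apply exp_pos. apply Rmult_le_compat_l. auto. lra. }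
  right. rewrite Zchasles. replace (K * (Du + Dv) * exp (Z0 t) * exp (b * t) * exp ((eta - b) * s)) with (K * (Du + Dv) * (exp (Z0 t) * exp (b * t) * exp ((eta - b) * s))) by ring.
  replace (exp (Z0 t - Z0 s) * exp (b * (t - s)) * (K * ((Du + Dv) * exp (eta * s + Z0 s)))) with (K * (Du + Dv) * (exp (Z0 t - Z0 s) * exp (b * (t - s)) * exp (eta * s + Z0 s))) by ring.
  f_equal. rewrite <- !exp_plus. f_equal. ring. Qed.


Lemma D_nonneg (u1 u2 : R -> vec n) (v1 v2 : R -> vec m) Du Dv : (forall s, s <= 0 -> w s * vnorm (vsub (u1 s) (u2 s)) <= Du) ->
  (forall s, s <= 0 -> w s * vnorm (vsub (v1 s) (v2 s)) <= Dv) -> 0 <= Du + Dv.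
Proof. intros H1 H2. specialize (H1 0 (Rle_refl 0)). specialize (H2 0 (Rle_refl 0)).
  pose proof (w_pos 0). pose proof (vnorm_ge0 _ (vsub (u1 0) (u2 0))). pose proof (vnorm_ge0 _ (vsub (v1 0) (v2 0))).
  assert (0 <= w 0 * vnorm (vsub (u1 0) (u2 0))) by (apply Rmult_le_pos; lra).
  assert (0 <= w 0 * vnorm (vsub (v1 0) (v2 0))) by (apply Rmult_le_pos; lra). lra. Qed.

Lemma est_u u1 v1 u1' v1' u2 v2 u2' v2' Du Dv : SIS u1 v1 u1' v1' -> SIS u2 v2 u2' v2' ->
  (forall s, s <= 0 -> w s * vnorm (vsub (u1 s) (u2 s)) <= Du) ->
  (forall s, s <= 0 -> w s * vnorm (vsub (v1 s) (v2 s)) <= Dv) ->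
  forall t, t <= 0 -> w t * vnorm (vsub (u1' t) (u2' t)) <= K / (a - eta) * (Du + Dv).
Proof. intros S1 S2 H1 H2 t Ht.
  destruct (S1 t Ht) as [[I1 [HI1 E1]] _]. destruct (S2 t Ht) as [[I2 [HI2 E2]] _].
  pose proof (D_nonneg _ _ _ _ _ _ H1 H2) as HD.
  set (C := K * (Du + Dv) * exp (Z0 t) * exp (a * t)).
  assert (Hh : is_RInt (fun s => C * exp ((eta - a) * s)) t 0 (C * ((exp ((eta - a) * 0) - exp ((eta - a) * t)) / (eta - a)))).
  { pose proof (is_RInt_expk (eta - a) t 0 ltac:(lra)) as He.
    exact (is_RInt_scal (V:=R_NormedModule) (fun s => exp ((eta - a) * s)) t 0 C _ He). }
  assert (Hv : vnorm (vsub (u1' t) (u2' t)) <= RInt (fun s => C * exp ((eta - a) * s)) t 0).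
  { rewrite E1, E2. rewrite (vnorm_ext _ _ (vsub I1 I2)) by (intros; unfold vsub, vadd; ring).
    rewrite vnorm_sub_sym.
    apply vint_bound with (gv := fun s => vsub (IA u1 v1 t s) (IA u2 v2 t s)). auto.
    - intros i. unfold vsub. apply is_RInt_diff_swap; apply has_is; auto.
    - eexists; exact Hh.
    - intros s Hs. unfold C. apply IA_diff; try lra. apply H1; lra. apply H2; lra. }
  rewrite (is_RInt_unique (V:=R_CompleteNormedModule) _ _ _ _ Hh) in Hv.
  rewrite Rmult_0_r, exp_0 in Hv.
  apply Rle_trans with (w t * (C * ((1 - exp ((eta - a) * t)) / (eta - a)))).
  { apply Rmult_le_compat_l. left; apply w_pos. exact Hv. }
  assert (Hw : w t * exp (Z0 t) * exp (a * t) = exp ((a - eta) * t)).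
  { unfold w, cminus_weight, Z0. rewrite <- !exp_plus. f_equal. ring. }
  assert (HPQ : exp ((a - eta) * t) * exp ((eta - a) * t) = 1).
  { rewrite <- exp_plus. replace ((a - eta) * t + (eta - a) * t) with 0 by ring. apply exp_0. }
  pose proof (exp_pos ((a - eta) * t)) as HP.
  set (P := exp ((a - eta) * t)) in *. set (Q := exp ((eta - a) * t)) in *.
  assert (KD : 0 <= K * (Du + Dv)) by (apply Rmult_le_pos; auto).
  replace (w t * (C * ((1 - Q) / (eta - a)))) with (K * (Du + Dv) * ((1 - P) / (a - eta))).
  2:{ unfold C. replace (w t * (K * (Du + Dv) * exp (Z0 t) * exp (a * t) * ((1 - Q) / (eta - a)))) with (K * (Du + Dv) * (w t * exp (Z0 t) * exp (a * t)) * ((1 - Q) / (eta - a))) by ring.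
      rewrite Hw. fold P.
      assert (EPQ : P * ((1 - Q) / (eta - a)) = (1 - P) / (a - eta)).
      { unfold Rdiv. replace (P * ((1 - Q) * / (eta - a))) with ((P - P * Q) * / (eta - a)) by ring. rewrite HPQ. field. lra. }
      rewrite <- EPQ. ring. }
  replace (K / (a - eta) * (Du + Dv)) with (K * (Du + Dv) * (1 / (a - eta))) by (field; lra).
  apply Rmult_le_compat_l; auto. unfold Rdiv. apply Rmult_le_compat_r. left; apply Rinv_0_lt_compat; lra. lra. Qed.


Lemma est_v u1 v1 u1' v1' u2 v2 u2' v2' Du Dv : SIS u1 v1 u1' v1' -> SIS u2 v2 u2' v2' ->
  (forall s, s <= 0 -> w s * vnorm (vsub (u1 s) (u2 s)) <= Du) ->
  (forall s, s <= 0 -> w s * vnorm (vsub (v1 s) (v2 s)) <= Dv) ->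
  forall t, t <= 0 -> w t * vnorm (vsub (v1' t) (v2' t)) <= K / (eta - b) * (Du + Dv).
Proof. intros S1 S2 H1 H2 t Ht.
  destruct (S1 t Ht) as [_ HV1]. destruct (S2 t Ht) as [_ HV2].
  pose proof (D_nonneg _ _ _ _ _ _ H1 H2) as HD.
  set (C := K * (Du + Dv) * exp (Z0 t) * exp (b * t)).
  assert (HC : 0 <= C) by (unfold C; repeat apply Rmult_le_pos; auto; left; apply exp_pos).
  assert (Hex1 : forall i T, T <= t -> ex_RInt (fun s => IB u1 v1 t s i) T t).
  { intros i T HT. destruct (HV1 i) as [Hi _]. destruct (Hi T HT) as [pr]. apply ex_RInt_Reals_1; exact pr. }
  assert (Hex2 : forall i T, T <= t -> ex_RInt (fun s => IB u2 v2 t s i) T t).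
  { intros i T HT. destruct (HV2 i) as [Hi _]. destruct (Hi T HT) as [pr]. apply ex_RInt_Reals_1; exact pr. }
  assert (HT : forall T, T <= t -> vnorm (fun i => RInt (fun s => IB u1 v1 t s i) T t - RInt (fun s => IB u2 v2 t s i) T t)
                                    <= C * exp ((eta - b) * t) / (eta - b)).
  { intros T HTt.
    assert (Hh : is_RInt (fun s => C * exp ((eta - b) * s)) T t (C * ((exp ((eta - b) * t) - exp ((eta - b) * T)) / (eta - b)))).
    { pose proof (is_RInt_expk (eta - b) T t ltac:(lra)) as He.
      exact (is_RInt_scal (V:=R_NormedModule) (fun s => exp ((eta - b) * s)) T t C _ He). }
    eapply Rle_trans. apply vint_bound with (gv := fun s => vsub (IB u1 v1 t s) (IB u2 v2 t s)) (h := fun s => C * exp ((eta - b) * s)). exact HTt.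
    - intros i. unfold vsub. apply is_RInt_minus_R; apply (RInt_correct (V:=R_CompleteNormedModule)); [apply Hex1 | apply Hex2]; exact HTt.
    - eexists; exact Hh.
    - intros s Hs. unfold C. apply IB_diff; [lra | apply H1; lra | apply H2; lra].
    - rewrite (is_RInt_unique (V:=R_CompleteNormedModule) _ _ _ _ Hh). pose proof (exp_pos ((eta - b) * T)).
      replace (C * exp ((eta - b) * t) / (eta - b)) with (C * (exp ((eta - b) * t) / (eta - b))) by (unfold Rdiv; ring).
      apply Rmult_le_compat_l; auto. unfold Rdiv. apply Rmult_le_compat_r. left; apply Rinv_0_lt_compat; lra. lra. }
  assert (Hlim : vnorm (vsub (v1' t) (v2' t)) <= C * exp ((eta - b) * t) / (eta - b)).
  { apply Rle_plus_epsilon. intros eps He.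
    set (e := eps / (2 * (INR m + 1))). assert (Hm : 0 <= INR m) by apply pos_INR.
    assert (He0 : 0 < e) by (unfold e; apply Rdiv_lt_0_compat; lra).
    destruct (fin_min m (fun i T => T <= t -> Rabs (Defs.RInt (fun s => IB u1 v1 t s i) T t - v1' t i) < e /\ Rabs (Defs.RInt (fun s => IB u2 v2 t s i) T t - v2' t i) < e)) as [M HM].
    { intros i. destruct (HV1 i) as [_ L1]. destruct (HV2 i) as [_ L2]. destruct (L1 e He0) as [M1 G1]. destruct (L2 e He0) as [M2 G2].
      exists (Rmin M1 M2). intros T HT0 _. split. apply G1. pose proof (Rmin_l M1 M2); lra. apply G2. pose proof (Rmin_r M1 M2); lra. }
    set (T := Rmin M t). assert (HT1 : T <= M) by apply Rmin_l. assert (HT2 : T <= t) by apply Rmin_r.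
    eapply Rle_trans. apply (vnorm_split _ _ (fun i => RInt (fun s => IB u1 v1 t s i) T t - RInt (fun s => IB u2 v2 t s i) T t)).
    apply Rplus_le_compat. apply HT; auto.
    eapply Rle_trans. apply vnorm_le_const with (c := 2 * e).
    { intros i. destruct (HM i T HT1 HT2) as [G1 G2]. rewrite !DRInt_eq in G1, G2 by auto. unfold vsub.
      replace (v1' t i - v2' t i - (RInt (fun s => IB u1 v1 t s i) T t - RInt (fun s => IB u2 v2 t s i) T t))
        with (- (RInt (fun s => IB u1 v1 t s i) T t - v1' t i) + (RInt (fun s => IB u2 v2 t s i) T t - v2' t i)) by lra.
      eapply Rle_trans. apply Rabs_triang. rewrite Rabs_Ropp. lra. }
    unfold e. apply Rle_trans with (eps * (INR m / (INR m + 1))). right; field; lra.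
    rewrite <- (Rmult_1_r eps) at 2. apply Rmult_le_compat_l. lra. apply Rmult_le_reg_r with (INR m + 1). lra.
    unfold Rdiv. rewrite Rmult_assoc, Rinv_l by lra. lra. }
  eapply Rle_trans. apply Rmult_le_compat_l. left; apply w_pos. exact Hlim.
  right. unfold C. replace (w t * (K * (Du + Dv) * exp (Z0 t) * exp (b * t) * exp ((eta - b) * t) / (eta - b)))
    with (K * (Du + Dv) / (eta - b) * (w t * exp (Z0 t) * exp (b * t) * exp ((eta - b) * t))) by (field; lra).
  replace (w t * exp (Z0 t) * exp (b * t) * exp ((eta - b) * t)) with 1. field; lra.
  unfold w, cminus_weight, Z0. rewrite <- !exp_plus. rewrite <- exp_0. f_equal. ring. Qed.


Lemma DeltaF_zero p (h : vec n -> vec m -> vec p) z s i : DeltaF h z xh yh vzero vzero s i = 0.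
Proof. unfold DeltaF. rewrite !vadd_vzero. unfold vsub. ring. Qed.

Lemma mvmul_zero_vec p (E : mat p) (x : vec p) c i : (forall j, x j = 0) -> vscale c (mvmul E x) i = 0.
Proof. intros H. unfold vscale, mvmul. rewrite (fsum_ext _ _ (fun _ => 0)). rewrite fsum_zero. ring. intros j; rewrite H; ring. Qed.

Definition uhom t := vadd (vscale (exp (Defs.RInt zeta 0 t)) (mvmul (mexp A t) u0)) vzero.

Lemma SIS_zero : SIS (fun _ => vzero) (fun _ => vzero) uhom (fun _ => vzero).
Proof. intros t Ht. split.
  - exists vzero. split; [|reflexivity]. intros i. apply is_has.
    eapply is_RInt_ext; [|apply is_RInt_zero]. intros s _. unfold IA. symmetry. apply mvmul_zero_vec. intros j. apply DeltaF_zero.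
  - intros i. assert (HZ : forall T, is_RInt (fun s => IB (fun _ => vzero) (fun _ => vzero) t s i) T t 0).
    { intros T. eapply is_RInt_ext; [|apply is_RInt_zero]. intros s _. unfold IB. symmetry. apply mvmul_zero_vec. intros j. apply DeltaF_zero. }
    split.
    + intros T HT. constructor. apply ex_RInt_Reals_0. eexists; apply HZ.
    + intros eps He. exists 0. intros T HT. rewrite DRInt_eq by (eexists; apply HZ).
      rewrite (is_RInt_unique (V:=R_CompleteNormedModule) _ _ _ _ (HZ T)). unfold vzero. rewrite Rminus_0_r, Rabs_R0. auto. Qed.

Definition HAf (u : R -> vec n) (v : R -> vec m) s :=
  vscale (exp (- Z0 s)) (mvmul (mexp A (0 - s)) (DeltaF f zeta xh yh (u s) (v s) s)).
Definition HBf (u : R -> vec n) (v : R -> vec m) s :=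
  vscale (exp (- Z0 s)) (mvmul (mexp B (0 - s)) (DeltaF g zeta xh yh (u s) (v s) s)).

Lemma IA_split u v t s i : IA u v t s i = fsum n (fun j => (exp (Z0 t) * mexp A t i j) * HAf u v s j).
Proof. unfold IA, HAf, vscale. rewrite Zchasles. replace (0 - s) with (- s) by ring.
  rewrite (mvmul_mexp_split A t s). unfold mvmul at 1. unfold Rminus. rewrite exp_plus.
  rewrite Rmult_assoc, <- fsum_scal, <- fsum_scal. apply fsum_ext. intros j. unfold mvmul. ring. Qed.

Lemma IB_split u v t s i : IB u v t s i = fsum m (fun j => (exp (Z0 t) * mexp B t i j) * HBf u v s j).
Proof. unfold IB, HBf, vscale. rewrite Zchasles. replace (0 - s) with (- s) by ring.
  rewrite (mvmul_mexp_split B t s). unfold mvmul at 1. unfold Rminus. rewrite exp_plus.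
  rewrite Rmult_assoc, <- fsum_scal, <- fsum_scal. apply fsum_ext. intros j. unfold mvmul. ring. Qed.

Lemma negZ_ctn t : ctn (fun s => exp (- Z0 s)) t.
Proof. apply ctn_exp. apply (Lm_opp (sideB t) t (good_B t)). apply Z0_ctn. Qed.

Lemma HAf_int u v j x y : allctn u -> allctn v -> ex_RInt (fun s => HAf u v s j) x y.
Proof. intros Hu Hv. apply cdl_RInt. unfold HAf, DeltaF.
  apply (gen_cdl zeta n m n f K (fun s => mexp A (0 - s)) (fun s => exp (- Z0 s))
     (fun s => vadd (u s) (xh s)) xh (fun s => vadd (v s) (yh s)) yh j zeta_cdl Hflip).
  intros; apply ctn_mexp. apply negZ_ctn. apply allctn_add; auto. intros i t0; apply xh_ctn.
  intros i t0; apply xh_ctn. apply allctn_add; auto. intros i t0; apply yh_ctn. intros i t0; apply yh_ctn. Qed.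

Lemma HBf_int u v j x y : allctn u -> allctn v -> ex_RInt (fun s => HBf u v s j) x y.
Proof. intros Hu Hv. apply cdl_RInt. unfold HBf, DeltaF.
  apply (gen_cdl zeta n m m g K (fun s => mexp B (0 - s)) (fun s => exp (- Z0 s))
     (fun s => vadd (u s) (xh s)) xh (fun s => vadd (v s) (yh s)) yh j zeta_cdl Hglip).
  intros; apply ctn_mexp. apply negZ_ctn. apply allctn_add; auto. intros i t0; apply xh_ctn.
  intros i t0; apply xh_ctn. apply allctn_add; auto. intros i t0; apply yh_ctn. intros i t0; apply yh_ctn. Qed.

Lemma HBf_bound u v Mu Mv s j : s <= 0 -> w s * vnorm (u s) <= Mu -> w s * vnorm (v s) <= Mv ->
  Rabs (HBf u v s j) <= K * (Mu + Mv) * exp ((eta - b) * s).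
Proof. intros Hs H1 H2. eapply Rle_trans. apply comp_le_vnorm. unfold HBf.
  eapply Rle_trans. apply (HB' (exp (- Z0 s)) 0 s). lra. left; apply exp_pos.
  rewrite (vnorm_ext _ _ (vsub (DeltaF g zeta xh yh (u s) (v s) s) (DeltaF g zeta xh yh vzero vzero s))).
  2:{ intros i. unfold vsub. rewrite DeltaF_zero. ring. }
  eapply Rle_trans. apply Rmult_le_compat_l. apply Rmult_le_pos; left; apply exp_pos. apply DeltaF_lip. exact Hglip.
  rewrite (vnorm_ext _ (vsub (u s) vzero) (u s)) by (intros; unfold vsub, vzero; ring).
  rewrite (vnorm_ext _ (vsub (v s) vzero) (v s)) by (intros; unfold vsub, vzero; ring).
  apply w_bound in H1. apply w_bound in H2.
  apply Rle_trans with (exp (- Z0 s) * exp (b * (0 - s)) * (K * ((Mu + Mv) * exp (eta * s + Z0 s)))).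
  { apply Rmult_le_compat_l. apply Rmult_le_pos; left; apply exp_pos. apply Rmult_le_compat_l. auto. lra. }
  right. replace (exp (- Z0 s) * exp (b * (0 - s)) * (K * ((Mu + Mv) * exp (eta * s + Z0 s)))) with
    (K * (Mu + Mv) * (exp (- Z0 s) * exp (b * (0 - s)) * exp (eta * s + Z0 s))) by ring.
  f_equal. rewrite <- !exp_plus. f_equal. ring. Qed.


Lemma Z0_Lm t : Lm (sideB t) (fun s => exp (Z0 s)) (exp (Z0 t)).
Proof. exact (ctn_exp Z0 t (Z0_ctn t)). Qed.

Lemma mexp_Lm p (E : mat p) i j t : Lm (sideB t) (fun s => mexp E s i j) (mexp E t i j).
Proof. exact (cpt_ctn _ _ (mexp_cont E i j t)). Qed.

Lemma exist_step u v : in_Cminus zeta eta u v -> exists u' v', in_Cminus zeta eta u' v' /\ SIS u v u' v'.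
Proof.
  intros [Hcu [Hcv [[Mu HMu] [Mv HMv]]]].
  set (ub := fun s => u (Rmin s 0)). set (vb := fun s => v (Rmin s 0)).
  assert (Hub : allctn ub) by (intros j t; apply ext_ctn; auto).
  assert (Hvb : allctn vb) by (intros j t; apply ext_ctn; auto).
  assert (EA : forall t s, s <= 0 -> IA ub vb t s = IA u v t s) by (intros; unfold IA, ub, vb; rewrite Rmin_left; auto).
  assert (EB : forall t s, s <= 0 -> IB ub vb t s = IB u v t s) by (intros; unfold IB, ub, vb; rewrite Rmin_left; auto).
  assert (HMu0 : 0 <= Mu). { pose proof (HMu 0 (Rle_refl 0)) as H0. change (cminus_weight zeta eta 0) with (w 0) in H0. pose proof (w_pos 0). pose proof (vnorm_ge0 _ (u 0)).
    assert (0 <= w 0 * vnorm (u 0)) by (apply Rmult_le_pos; lra). lra. }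
  assert (HMv0 : 0 <= Mv). { pose proof (HMv 0 (Rle_refl 0)) as H0. change (cminus_weight zeta eta 0) with (w 0) in H0. pose proof (w_pos 0). pose proof (vnorm_ge0 _ (v 0)).
    assert (0 <= w 0 * vnorm (v 0)) by (apply Rmult_le_pos; lra). lra. }
  set (PA := fun t j => RInt (fun s => HAf ub vb s j) 0 t).
  assert (HAi : forall j x y, ex_RInt (fun s => HAf ub vb s j) x y) by (intros; apply HAf_int; auto).
  assert (HBi : forall j x y, ex_RInt (fun s => HBf ub vb s j) x y) by (intros; apply HBf_int; auto).
  set (Cb := K * (Mu + Mv)). assert (HCb : 0 <= Cb) by (unfold Cb; apply Rmult_le_pos; lra).
  assert (Hk : 0 < eta - b) by lra.
  assert (HBb : forall j s, s <= 0 -> Rabs (HBf ub vb s j) <= Cb * exp ((eta - b) * s)).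
  { intros j s Hs. apply HBf_bound; auto; unfold ub, vb; rewrite Rmin_left by auto; auto. }
  set (L := fun j => epsilon (inhabits 0) (fun L => forall T, T <= 0 -> Rabs (RInt (fun s => HBf ub vb s j) T 0 - L) <= Cb * exp ((eta - b) * T) / (eta - b))).
  assert (HL : forall j T, T <= 0 -> Rabs (RInt (fun s => HBf ub vb s j) T 0 - L j) <= Cb * exp ((eta - b) * T) / (eta - b)).
  { intros j. unfold L. apply epsilon_spec. apply improper_limit; auto. }
  set (u' := fun t => vadd (vscale (exp (Defs.RInt zeta 0 t)) (mvmul (mexp A t) u0)) (fun i => fsum n (fun j => (exp (Z0 t) * mexp A t i j) * PA t j))).
  set (W := fun t j => L j + RInt (fun s => HBf ub vb s j) 0 t).
  set (v' := fun t (i : Fin.t m) => fsum m (fun j => (exp (Z0 t) * mexp B t i j) * W t j)).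
  assert (HS : SIS u v u' v').
  { intros t Ht. split.
    - eexists. split; [|reflexivity]. intros i. apply is_has.
      eapply is_RInt_ext. 2: apply (is_RInt_fsum n (fun j s => HAf ub vb s j) (fun j => exp (Z0 t) * mexp A t i j) (PA t)).
      + intros s Hs. rewrite Rmin_right, Rmax_left in Hs by lra. rewrite <- (EA t s) by lra. symmetry. apply IA_split.
      + intros j. apply (RInt_correct (V:=R_CompleteNormedModule)). auto.
    - intros i.
      assert (Hex : forall T, T <= t -> ex_RInt (fun s => IB u v t s i) T t).
      { intros T HT. eapply ex_RInt_ext; [|apply (IB_int ub vb t i T t Hub Hvb)]. intros s Hs.
        rewrite Rmin_left, Rmax_right in Hs by lra. cbv beta. rewrite EB by lra. auto. }
      split.
      + intros T HT. constructor. apply ex_RInt_Reals_0. auto.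
      + intros eps He. set (Sc := fsum m (fun j => Rabs (exp (Z0 t) * mexp B t i j))).
        assert (HSc : 0 <= Sc) by (apply fsum_nonneg; intros; apply Rabs_pos).
        destruct (exp_small (Sc * Cb / (eta - b)) (eta - b) eps) as [M [HM0 HM]]; auto.
        { apply Rdiv_le_0_compat; [apply Rmult_le_pos|]; lra. }
        exists (Rmin M t). intros T HT. pose proof (Rmin_l M t). pose proof (Rmin_r M t).
        rewrite DRInt_eq by (apply Hex; lra).
        assert (HI : RInt (fun s => IB u v t s i) T t = fsum m (fun j => (exp (Z0 t) * mexp B t i j) * RInt (fun s => HBf ub vb s j) T t)).
        { apply (is_RInt_unique (V:=R_CompleteNormedModule)).
          eapply is_RInt_ext. 2: apply (is_RInt_fsum m (fun j s => HBf ub vb s j) (fun j => exp (Z0 t) * mexp B t i j) (fun j => RInt (fun s => HBf ub vb s j) T t)).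
          + intros s Hs. rewrite Rmin_left, Rmax_right in Hs by lra. rewrite <- (EB t s) by lra. symmetry. apply IB_split.
          + intros j. apply (RInt_correct (V:=R_CompleteNormedModule)). auto. }
        rewrite HI. unfold v', W. rewrite fsum_lin_diff.
        eapply Rle_lt_trans. apply (fsum_abs_bound m _ _ (Cb * exp ((eta - b) * T) / (eta - b))).
        { intros j. rewrite (RInt_Chasles_R _ T 0 t) by auto.
          replace (RInt (fun s => HBf ub vb s j) T 0 + RInt (fun s => HBf ub vb s j) 0 t - (L j + RInt (fun s => HBf ub vb s j) 0 t))
            with (RInt (fun s => HBf ub vb s j) T 0 - L j) by lra. apply HL. lra. }
        cbv beta. change (fsum m (fun j => Rabs (exp (Z0 t) * mexp B t i j))) with Sc. replace (Sc * (Cb * exp ((eta - b) * T) / (eta - b))) with (Sc * Cb / (eta - b) * exp ((eta - b) * T)) by (field; lra).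
        apply HM. lra. }
  exists u', v'. split; [|exact HS].
  assert (Hu' : forall j t, ctn (fun s => u' s j) t).
  { intros j t. unfold u', vadd, vscale, mvmul.
    apply (Lm_plus (sideB t) t (good_B t)).
    - apply (Lm_mult (sideB t) t (good_B t)). apply Z0_Lm.
      apply (Lm_fsum (sideB t) t (good_B t) n (fun k s => mexp A s j k * u0 k)). intros k.
      apply (Lm_mult (sideB t) t (good_B t)). apply mexp_Lm. apply (Lm_const (sideB t) t (good_B t)).
    - apply (Lm_fsum (sideB t) t (good_B t) n (fun k s => exp (Z0 s) * mexp A s j k * PA s k)). intros k.
      apply (Lm_mult (sideB t) t (good_B t)). apply (Lm_mult (sideB t) t (good_B t)). apply Z0_Lm. apply mexp_Lm.
      exact (prim_ctn _ t (fun T => HAi k 0 T)). }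
  assert (Hv' : forall j t, ctn (fun s => v' s j) t).
  { intros j t. unfold v', W.
    apply (Lm_fsum (sideB t) t (good_B t) m (fun k s => exp (Z0 s) * mexp B s j k * (L k + RInt (fun s0 => HBf ub vb s0 k) 0 s))). intros k.
    apply (Lm_mult (sideB t) t (good_B t)). apply (Lm_mult (sideB t) t (good_B t)). apply Z0_Lm. apply mexp_Lm.
    exact (ctn_plus_const (L k) (fun s => RInt (fun s0 => HBf ub vb s0 k) 0 s) t (prim_ctn _ t (fun T => HBi k 0 T))). }
  assert (HZ1 : forall s, s <= 0 -> w s * vnorm (vsub (u s) vzero) <= Mu).
  { intros s Hs. rewrite (vnorm_ext _ _ (u s)) by (intros; unfold vsub, vzero; ring). auto. }
  assert (HZ2 : forall s, s <= 0 -> w s * vnorm (vsub (v s) vzero) <= Mv).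
  { intros s Hs. rewrite (vnorm_ext _ _ (v s)) by (intros; unfold vsub, vzero; ring). auto. }
  split. apply allctn_cont_neg; auto. split. apply allctn_cont_neg; auto. split.
  - exists (vnorm u0 + K / (a - eta) * (Mu + Mv)). intros t Ht.
    pose proof (est_u _ _ _ _ _ _ _ _ _ _ HS SIS_zero HZ1 HZ2 t Ht) as E.
    change (w t * vnorm (u' t) <= vnorm u0 + K / (a - eta) * (Mu + Mv)).
    eapply Rle_trans. apply Rmult_le_compat_l. left; apply w_pos. apply (vnorm_split _ (u' t) (uhom t)).
    rewrite Rmult_plus_distr_l. apply Rplus_le_compat; auto.
    unfold uhom. rewrite (vnorm_ext _ _ (vscale (exp (Defs.RInt zeta 0 t)) (mvmul (mexp A t) u0))) by (intros; unfold vadd, vzero; ring).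
    rewrite vnorm_scale, Rabs_right by (left; apply exp_pos).
    eapply Rle_trans. apply Rmult_le_compat_l. left; apply w_pos. apply Rmult_le_compat_l. left; apply exp_pos. apply HA; auto.
    replace (w t * (exp (Defs.RInt zeta 0 t) * (exp (a * t) * vnorm u0))) with (exp ((a - eta) * t) * vnorm u0).
    2:{ unfold w, cminus_weight. replace (exp ((a - eta) * t)) with (exp (- eta * t - Defs.RInt zeta 0 t) * exp (Defs.RInt zeta 0 t) * exp (a * t)).
        ring. rewrite <- !exp_plus. f_equal. ring. }
    rewrite <- (Rmult_1_l (vnorm u0)) at 2. apply Rmult_le_compat_r. apply vnorm_ge0.
    rewrite <- exp_0. apply exp_le. nra.
  - exists (K / (eta - b) * (Mu + Mv)). intros t Ht.
    pose proof (est_v _ _ _ _ _ _ _ _ _ _ HS SIS_zero HZ1 HZ2 t Ht) as E.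
    rewrite (vnorm_ext _ _ (v' t)) in E by (intros; unfold vsub, vzero; ring). exact E.
Qed.


Definition rho := K / (a - eta) + K / (eta - b).
Lemma rho_range : 0 <= rho < 1.
Proof. unfold rho. split; auto. apply Rplus_le_le_0_compat; apply Rdiv_le_0_compat; lra. Qed.

Fixpoint dseq (S0 : R * R) k : R * R := match k with
  | O => S0
  | S k' => (K / (a - eta) * (fst (dseq S0 k') + snd (dseq S0 k')), K / (eta - b) * (fst (dseq S0 k') + snd (dseq S0 k')))
  end.

Lemma dseq_sum S0 k : fst (dseq S0 k) + snd (dseq S0 k) = rho ^ k * (fst S0 + snd S0).
Proof. induction k. simpl; ring.
  replace (rho ^ S k * (fst S0 + snd S0)) with (rho * (rho ^ k * (fst S0 + snd S0))) by (simpl; ring).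
  rewrite <- IHk. cbn [dseq fst snd]. unfold rho. ring. Qed.

Lemma chain_bounds (u1 v1 u1' v1' u2 v2 u2' v2' : nat -> _) S0 :
  (forall k, SIS (u1 k) (v1 k) (u1' k) (v1' k)) -> (forall k, SIS (u2 k) (v2 k) (u2' k) (v2' k)) ->
  (forall k s, u1 (S k) s = u1' k s) -> (forall k s, v1 (S k) s = v1' k s) ->
  (forall k s, u2 (S k) s = u2' k s) -> (forall k s, v2 (S k) s = v2' k s) ->
  (forall s, s <= 0 -> w s * vnorm (vsub (u1 O s) (u2 O s)) <= fst S0) ->
  (forall s, s <= 0 -> w s * vnorm (vsub (v1 O s) (v2 O s)) <= snd S0) ->
  forall k, (forall s, s <= 0 -> w s * vnorm (vsub (u1 k s) (u2 k s)) <= fst (dseq S0 k)) /\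
            (forall s, s <= 0 -> w s * vnorm (vsub (v1 k s) (v2 k s)) <= snd (dseq S0 k)).
Proof. intros S1 S2 E1 F1 E2 F2 H1 H2 k. induction k. split; auto.
  destruct IHk as [IH1 IH2]. split.
  - intros s Hs. rewrite E1, E2. simpl. apply (est_u _ _ _ _ _ _ _ _ _ _ (S1 k) (S2 k) IH1 IH2 s Hs).
  - intros s Hs. rewrite F1, F2. simpl. apply (est_v _ _ _ _ _ _ _ _ _ _ (S1 k) (S2 k) IH1 IH2 s Hs). Qed.

Lemma bound_to_rho p (x : vec p) (y : vec p) t k S0 e1 e2 : t <= 0 -> 0 <= e2 ->
  w t * vnorm (vsub x y) <= e1 -> e1 + e2 = rho ^ k * S0 -> w t * vnorm (vsub x y) <= S0 * rho ^ k.
Proof. intros Ht He2 H E. nra. Qed.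

Lemma uniq u v u' v' : in_Cminus zeta eta u v -> in_Cminus zeta eta u' v' -> SIS u v u v -> SIS u' v' u' v' ->
  forall t, t <= 0 -> u' t = u t /\ v' t = v t.
Proof. intros [_ [_ [[Mu HMu] [Mv HMv]]]] [_ [_ [[Mu' HMu'] [Mv' HMv']]]] S1 S2.
  pose proof (chain_bounds (fun _ => u) (fun _ => v) (fun _ => u) (fun _ => v) (fun _ => u') (fun _ => v') (fun _ => u') (fun _ => v') (Mu + Mu', Mv + Mv')
    (fun _ => S1) (fun _ => S2) (fun _ _ => eq_refl) (fun _ _ => eq_refl) (fun _ _ => eq_refl) (fun _ _ => eq_refl)) as H.
  assert (B1 : forall s, s <= 0 -> w s * vnorm (vsub (u s) (u' s)) <= Mu + Mu').
  { intros s Hs. eapply Rle_trans. apply Rmult_le_compat_l. left; apply w_pos. apply vnorm_sub_le.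
    rewrite Rmult_plus_distr_l. apply Rplus_le_compat. apply HMu; auto. apply HMu'; auto. }
  assert (B2 : forall s, s <= 0 -> w s * vnorm (vsub (v s) (v' s)) <= Mv + Mv').
  { intros s Hs. eapply Rle_trans. apply Rmult_le_compat_l. left; apply w_pos. apply vnorm_sub_le.
    rewrite Rmult_plus_distr_l. apply Rplus_le_compat. apply HMv; auto. apply HMv'; auto. }
  specialize (H B1 B2). simpl in H.
  assert (HS0 : 0 <= Mu + Mu' + (Mv + Mv')) by exact (D_nonneg u u' v v' _ _ B1 B2).
  intros t Ht. pose proof (w_pos t) as Hw.
  assert (Hu : w t * vnorm (vsub (u t) (u' t)) = 0).
  { apply (small_zero _ (Mu + Mu' + (Mv + Mv')) rho); auto. apply Rmult_le_pos; [lra|apply vnorm_ge0]. apply rho_range.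
    intros k. destruct (H k) as [H1 H2]. pose proof (dseq_sum (Mu + Mu', Mv + Mv') k) as E. simpl in E.
    specialize (H2 t Ht). assert (0 <= w t * vnorm (vsub (v t) (v' t))) by (apply Rmult_le_pos; [lra|apply vnorm_ge0]).
    specialize (H1 t Ht). nra. }
  assert (Hv : w t * vnorm (vsub (v t) (v' t)) = 0).
  { apply (small_zero _ (Mu + Mu' + (Mv + Mv')) rho); auto. apply Rmult_le_pos; [lra|apply vnorm_ge0]. apply rho_range.
    intros k. destruct (H k) as [H1 H2]. pose proof (dseq_sum (Mu + Mu', Mv + Mv') k) as E. simpl in E.
    specialize (H1 t Ht). assert (0 <= w t * vnorm (vsub (u t) (u' t))) by (apply Rmult_le_pos; [lra|apply vnorm_ge0]).
    specialize (H2 t Ht). nra. }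
  apply Rmult_integral in Hu. apply Rmult_integral in Hv.
  destruct Hu as [Hu|Hu]; [lra|]. destruct Hv as [Hv|Hv]; [lra|].
  split; symmetry; apply vec_eq; auto. Qed.


Definition stepF (p : (R -> vec n) * (R -> vec m)) : (R -> vec n) * (R -> vec m) :=
  epsilon (inhabits p) (fun q => in_Cminus zeta eta (fst p) (snd p) ->
     in_Cminus zeta eta (fst q) (snd q) /\ SIS (fst p) (snd p) (fst q) (snd q)).

Lemma stepF_spec p : in_Cminus zeta eta (fst p) (snd p) ->
  in_Cminus zeta eta (fst (stepF p)) (snd (stepF p)) /\ SIS (fst p) (snd p) (fst (stepF p)) (snd (stepF p)).
Proof. intros H.
  assert (Hex : exists q, in_Cminus zeta eta (fst p) (snd p) -> in_Cminus zeta eta (fst q) (snd q) /\ SIS (fst p) (snd p) (fst q) (snd q)).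
  { destruct (exist_step _ _ H) as [u' [v' [H1 H2]]]. exists (u', v'). intros _. simpl. auto. }
  exact (epsilon_spec (inhabits p) _ Hex H). Qed.

Fixpoint it k : (R -> vec n) * (R -> vec m) := match k with
  | O => (fun _ => vzero, fun _ => vzero)
  | S k' => stepF (it k')
  end.

Lemma vnorm_vzero p : vnorm (@vzero p) = 0.
Proof. unfold vnorm, vzero. rewrite (fsum_ext _ _ (fun _ => 0)) by (intros; ring). rewrite fsum_zero. apply sqrt_0. Qed.

Lemma zero_in : in_Cminus zeta eta (fun _ : R => @vzero n) (fun _ : R => @vzero m).
Proof. split; [|split; [|split]].
  - intros t _ eps He. exists 1. split. lra. intros. rewrite (vnorm_ext _ _ vzero) by (intros; unfold vsub, vzero; ring). rewrite vnorm_vzero. auto.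
  - intros t _ eps He. exists 1. split. lra. intros. rewrite (vnorm_ext _ _ vzero) by (intros; unfold vsub, vzero; ring). rewrite vnorm_vzero. auto.
  - exists 0. intros. rewrite vnorm_vzero. lra.
  - exists 0. intros. rewrite vnorm_vzero. lra. Qed.

Lemma it_in k : in_Cminus zeta eta (fst (it k)) (snd (it k)).
Proof. induction k. apply zero_in. simpl. apply stepF_spec. auto. Qed.

Lemma it_SIS k : SIS (fst (it k)) (snd (it k)) (fst (it (S k))) (snd (it (S k))).
Proof. simpl. apply stepF_spec. apply it_in. Qed.

Lemma lim_cont_neg p (Uk : nat -> R -> vec p) (Ul : R -> vec p) c0 : 0 <= c0 -> (forall k, cont_neg (Uk k)) ->
  (forall k t, t <= 0 -> w t * vnorm (vsub (Ul t) (Uk k t)) <= c0 * rho ^ k) -> cont_neg Ul.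
Proof. intros Hc0 Hk Hb t Ht eps He.
  assert (Hwi : exists d1, 0 < d1 /\ forall s, Rabs (s - t) < d1 -> exp (eta * s + Z0 s) < exp (eta * t + Z0 t) + 1).
  { assert (C : ctn (fun s => exp (eta * s + Z0 s)) t).
    { apply ctn_exp. apply (Lm_plus (sideB t) t (good_B t) (fun s => eta * s) Z0).
      apply (Lm_mult (sideB t) t (good_B t) (fun _ => eta) (fun s => s)). apply (Lm_const (sideB t) t (good_B t)). apply ctn_id. apply Z0_ctn. }
    destruct (C 1 Rlt_0_1) as [d [Hd G]]. exists d. split; auto. intros s Hs. specialize (G s Hs). apply Rabs_def2 in G. lra. }
  destruct Hwi as [d1 [Hd1 Gw]]. set (Wt := exp (eta * t + Z0 t) + 1). assert (HWt : 0 < Wt) by (unfold Wt; pose proof (exp_pos (eta * t + Z0 t)); lra).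
  assert (Hy : 0 < eps / (3 * (c0 + 1) * Wt)) by (apply Rdiv_lt_0_compat; [lra|]; apply Rmult_lt_0_compat; lra).
  destruct (pow_lt_1_zero rho ltac:(rewrite Rabs_right; pose proof rho_range; lra) _ Hy) as [N HN].
  specialize (HN N (Nat.le_refl N)). rewrite Rabs_right in HN by (apply Rle_ge, pow_le; apply rho_range).
  assert (Hsmall : c0 * rho ^ N * Wt < eps / 3).
  { pose proof (pow_le rho N (proj1 rho_range)).
    apply Rle_lt_trans with ((c0 + 1) * rho ^ N * Wt). apply Rmult_le_compat_r; lra.
    apply Rlt_le_trans with ((c0 + 1) * (eps / (3 * (c0 + 1) * Wt)) * Wt).
    apply Rmult_lt_compat_r; auto. apply Rmult_lt_compat_l; lra. right; field; lra. }
  assert (Hpt : forall s, s <= 0 -> Rabs (s - t) < d1 -> vnorm (vsub (Ul s) (Uk N s)) < eps / 3).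
  { intros s Hs Hst. pose proof (w_bound _ _ _ _ (Hb N s Hs)) as G. eapply Rle_lt_trans. exact G.
    eapply Rle_lt_trans; [|exact Hsmall]. apply Rmult_le_compat_l. apply Rmult_le_pos; auto. apply pow_le, rho_range. left; apply Gw; auto. }
  assert (He3 : 0 < eps / 3) by lra.
  destruct (Hk N t Ht (eps / 3) He3) as [d2 [Hd2 G2]].
  exists (Rmin d1 d2). split. apply Rmin_pos; auto. intros s Hs Hst.
  pose proof (Rmin_l d1 d2). pose proof (Rmin_r d1 d2).
  eapply Rle_lt_trans. apply (vnorm_sub_triang _ _ (Uk N s)).
  eapply Rle_lt_trans. apply Rplus_le_compat_l. apply (vnorm_sub_triang _ _ (Uk N t)).
  assert (vnorm (vsub (Ul s) (Uk N s)) < eps / 3) by (apply Hpt; auto; lra).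
  assert (vnorm (vsub (Uk N s) (Uk N t)) < eps / 3) by (apply G2; auto; lra).
  assert (vnorm (vsub (Uk N t) (Ul t)) < eps / 3).
  { rewrite vnorm_sub_sym. apply Hpt; auto. rewrite Rminus_diag, Rabs_R0; auto. }
  lra. Qed.


Lemma existence : exists u v, in_Cminus zeta eta u v /\ SIS u v u v.
Proof.
  set (U := fun k => fst (it k)). set (V := fun k => snd (it k)).
  destruct (it_in 1) as [_ [_ [[Mu1 HM1] [Mv1 HN1]]]].
  assert (B1 : forall s, s <= 0 -> w s * vnorm (vsub (U 1%nat s) (U 0%nat s)) <= fst (Mu1, Mv1)).
  { intros s Hs. simpl fst. rewrite (vnorm_ext _ _ (U 1%nat s)) by (intros; unfold vsub, U; simpl; unfold vzero; ring). apply HM1; auto. }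
  assert (B2 : forall s, s <= 0 -> w s * vnorm (vsub (V 1%nat s) (V 0%nat s)) <= snd (Mu1, Mv1)).
  { intros s Hs. simpl snd. rewrite (vnorm_ext _ _ (V 1%nat s)) by (intros; unfold vsub, V; simpl; unfold vzero; ring). apply HN1; auto. }
  pose proof (chain_bounds (fun k => U (S k)) (fun k => V (S k)) (fun k => U (S (S k))) (fun k => V (S (S k)))
     U V (fun k => U (S k)) (fun k => V (S k)) (Mu1, Mv1) (fun k => it_SIS (S k)) it_SIS
     (fun _ _ => eq_refl) (fun _ _ => eq_refl) (fun _ _ => eq_refl) (fun _ _ => eq_refl) B1 B2) as Hch.
  set (S0 := Mu1 + Mv1).
  assert (HS0 : 0 <= S0) by exact (D_nonneg _ _ _ _ _ _ B1 B2).
  assert (Hdu : forall k t, t <= 0 -> w t * vnorm (vsub (U (S k) t) (U k t)) <= S0 * rho ^ k).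
  { intros k t Ht. destruct (Hch k) as [H1 H2]. pose proof (dseq_sum (Mu1, Mv1) k) as E. simpl in E. fold S0 in E.
    specialize (H2 t Ht). assert (0 <= w t * vnorm (vsub (V (S k) t) (V k t))) by (apply Rmult_le_pos; [left; apply w_pos|apply vnorm_ge0]).
    specialize (H1 t Ht). nra. }
  assert (Hdv : forall k t, t <= 0 -> w t * vnorm (vsub (V (S k) t) (V k t)) <= S0 * rho ^ k).
  { intros k t Ht. destruct (Hch k) as [H1 H2]. pose proof (dseq_sum (Mu1, Mv1) k) as E. simpl in E. fold S0 in E.
    specialize (H1 t Ht). assert (0 <= w t * vnorm (vsub (U (S k) t) (U k t))) by (apply Rmult_le_pos; [left; apply w_pos|apply vnorm_ge0]).
    specialize (H2 t Ht). nra. }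
  pose proof rho_range as Hr.
  set (c0 := (INR n + INR m) * S0 / (1 - rho)).
  assert (Hc0 : 0 <= c0) by (unfold c0; apply Rdiv_le_0_compat; [apply Rmult_le_pos; [pose proof (pos_INR n); pose proof (pos_INR m); lra|auto]|lra]).
  assert (Glim : forall p' (Uk : nat -> R -> vec p'), (forall k t, t <= 0 -> w t * vnorm (vsub (Uk (S k) t) (Uk k t)) <= S0 * rho ^ k) ->
            forall k t, t <= 0 -> w t * vnorm (vsub (fun i => real (Lim_seq (fun j => Uk j t i))) (Uk k t)) <= INR p' * S0 / (1 - rho) * rho ^ k).
  { intros p' Uk HU k t Ht. pose proof (w_pos t) as Hw.
    assert (Hc : forall i, Rabs (real (Lim_seq (fun j => Uk j t i)) - Uk k t i) <= rho ^ k * (S0 / w t) / (1 - rho)).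
    { intros i. apply (geo_cauchy (fun j => Uk j t i) (S0 / w t) rho); auto. apply Rdiv_le_0_compat; lra. intros j.
      eapply Rle_trans. apply (comp_le_vnorm _ (vsub (Uk (S j) t) (Uk j t)) i).
      apply Rmult_le_reg_l with (w t); auto. replace (w t * (rho ^ j * (S0 / w t))) with (S0 * rho ^ j) by (field; lra). apply HU; auto. }
    eapply Rle_trans. apply Rmult_le_compat_l. left; auto. apply vnorm_le_const. apply Hc.
    right. field. split; lra. }
  set (uinf := fun t (i : Fin.t n) => real (Lim_seq (fun j => U j t i))).
  set (vinf := fun t (i : Fin.t m) => real (Lim_seq (fun j => V j t i))).
  assert (Hul : forall k t, t <= 0 -> w t * vnorm (vsub (uinf t) (U k t)) <= c0 * rho ^ k).
  { intros k t Ht. eapply Rle_trans. apply (Glim n U Hdu k t Ht). unfold c0. apply Rmult_le_compat_r. apply pow_le; lra.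
    unfold Rdiv. apply Rmult_le_compat_r. left; apply Rinv_0_lt_compat; lra. apply Rmult_le_compat_r; auto. pose proof (pos_INR m); lra. }
  assert (Hvl : forall k t, t <= 0 -> w t * vnorm (vsub (vinf t) (V k t)) <= c0 * rho ^ k).
  { intros k t Ht. eapply Rle_trans. apply (Glim m V Hdv k t Ht). unfold c0. apply Rmult_le_compat_r. apply pow_le; lra.
    unfold Rdiv. apply Rmult_le_compat_r. left; apply Rinv_0_lt_compat; lra. apply Rmult_le_compat_r; auto. pose proof (pos_INR n); lra. }
  assert (Hin : in_Cminus zeta eta uinf vinf).
  { split; [|split; [|split]].
    - apply (lim_cont_neg n U uinf c0); auto. intros k. apply (it_in k).
    - apply (lim_cont_neg m V vinf c0); auto. intros k. apply (it_in k).
    - exists c0. intros t Ht. specialize (Hul 0%nat t Ht). rewrite pow_O, Rmult_1_r in Hul.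
      rewrite (vnorm_ext _ _ (uinf t)) in Hul by (intros; unfold vsub, U; simpl; unfold vzero; ring). exact Hul.
    - exists c0. intros t Ht. specialize (Hvl 0%nat t Ht). rewrite pow_O, Rmult_1_r in Hvl.
      rewrite (vnorm_ext _ _ (vinf t)) in Hvl by (intros; unfold vsub, V; simpl; unfold vzero; ring). exact Hvl. }
  destruct (exist_step _ _ Hin) as [us [vs [Hins HSs]]].
  assert (Eq : forall t, t <= 0 -> us t = uinf t /\ vs t = vinf t).
  { intros t Ht. pose proof (w_pos t) as Hw.
    assert (G : forall p, w t * vnorm (vsub (us t) (uinf t)) <= (2 * K / (a - eta) + 1) * c0 * rho ^ p /\
                          w t * vnorm (vsub (vs t) (vinf t)) <= (2 * K / (eta - b) + 1) * c0 * rho ^ p).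
    { intros p. pose proof (it_SIS p) as S2. fold U V in S2.
      pose proof (est_u _ _ _ _ _ _ _ _ _ _ HSs S2 (Hul p) (Hvl p) t Ht) as E1.
      pose proof (est_v _ _ _ _ _ _ _ _ _ _ HSs S2 (Hul p) (Hvl p) t Ht) as E2.
      pose proof (Hul (S p) t Ht) as E3. pose proof (Hvl (S p) t Ht) as E4.
      assert (Hrp : rho ^ S p <= rho ^ p) by (simpl; pose proof (pow_le rho p (proj1 Hr)); nra).
      split.
      - eapply Rle_trans. apply Rmult_le_compat_l. left; auto. apply (vnorm_sub_triang _ _ (U (S p) t)).
        rewrite Rmult_plus_distr_l. rewrite (vnorm_sub_sym _ (U (S p) t)).
        assert (c0 * rho ^ S p <= c0 * rho ^ p) by (apply Rmult_le_compat_l; auto).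
        replace ((2 * K / (a - eta) + 1) * c0 * rho ^ p) with (K / (a - eta) * (c0 * rho ^ p + c0 * rho ^ p) + c0 * rho ^ p) by (field; lra). unfold U, V in *. lra.
      - eapply Rle_trans. apply Rmult_le_compat_l. left; auto. apply (vnorm_sub_triang _ _ (V (S p) t)).
        rewrite Rmult_plus_distr_l. rewrite (vnorm_sub_sym _ (V (S p) t)).
        assert (c0 * rho ^ S p <= c0 * rho ^ p) by (apply Rmult_le_compat_l; auto).
        replace ((2 * K / (eta - b) + 1) * c0 * rho ^ p) with (K / (eta - b) * (c0 * rho ^ p + c0 * rho ^ p) + c0 * rho ^ p) by (field; lra). unfold U, V in *. lra. }
    assert (HKa : 0 <= 2 * K / (a - eta) + 1) by (assert (0 <= K / (a - eta)) by (apply Rdiv_le_0_compat; lra); unfold Rdiv in *; nra).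
    assert (HKb : 0 <= 2 * K / (eta - b) + 1) by (assert (0 <= K / (eta - b)) by (apply Rdiv_le_0_compat; lra); unfold Rdiv in *; nra).
    assert (Z1 : w t * vnorm (vsub (us t) (uinf t)) = 0).
    { apply (small_zero _ ((2 * K / (a - eta) + 1) * c0) rho); auto. apply Rmult_le_pos; [lra|apply vnorm_ge0].
      apply Rmult_le_pos; auto. intros p. apply G. }
    assert (Z2 : w t * vnorm (vsub (vs t) (vinf t)) = 0).
    { apply (small_zero _ ((2 * K / (eta - b) + 1) * c0) rho); auto. apply Rmult_le_pos; [lra|apply vnorm_ge0].
      apply Rmult_le_pos; auto. intros p. apply G. }
    apply Rmult_integral in Z1. apply Rmult_integral in Z2.
    destruct Z1 as [Z1|Z1]; [lra|]. destruct Z2 as [Z2|Z2]; [lra|].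
    split; apply vec_eq; auto. }
  exists uinf, vinf. split; auto.
  intros t Ht. destruct (HSs t Ht) as [[I [HI EI]] HV]. destruct (Eq t Ht) as [E1 E2]. split.
  - exists I. split; auto. rewrite <- E1. auto.
  - intros i. rewrite <- E2. auto. Qed.

End Main.

Import Defs.

Theorem lemma4p2 (n m : nat) (A : mat n) (B : mat m) (a b K : R)
  (f : vec n -> vec m -> vec n) (g : vec n -> vec m -> vec m)
  (zeta : R -> R)
  (Hcadlag : cadlag zeta) (Hsub : sublinear zeta) (Hmean : zero_mean zeta)
  (Hba : b < 0 < a)
  (HA : forall t x, t <= 0 -> vnorm (mvmul (mexp A t) x) <= exp (a * t) * vnorm x)
  (HB : forall t y, 0 <= t -> vnorm (mvmul (mexp B t) y) <= exp (b * t) * vnorm y)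
  (Hf0 : f vzero vzero = vzero) (Hg0 : g vzero vzero = vzero)
  (Hflip : lipschitz f K) (Hglip : lipschitz g K)
  (x0 : vec n) (y0 : vec m) (xh : R -> vec n) (yh : R -> vec m)
  (Horbit : RDE_solution A B f g zeta x0 y0 xh yh)
  (eta : R) (Heta : 0 < eta) (Hbeta : b < eta < a)
  (Hrho : K / (a - eta) + K / (eta - b) < 1) :
  forall u0 : vec n,
    exists (u : R -> vec n) (v : R -> vec m),
      in_Cminus zeta eta u v /\ solves_IS A B f g zeta xh yh u0 u v /\
      forall (u' : R -> vec n) (v' : R -> vec m),
        in_Cminus zeta eta u' v' -> solves_IS A B f g zeta xh yh u0 u' v' ->
        forall t, t <= 0 -> u' t = u t /\ v' t = v t.
Proof.
  intros u0.
  set (K' := Rmax K 0).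
  assert (HK' : 0 <= K') by apply Rmax_r.
  assert (Hlip : forall p q r (h : vec p -> vec q -> vec r), lipschitz h K -> lipschitz h K').
  { intros p q r h Hh x1 y1 x2 y2. eapply Rle_trans. apply Hh. apply Rmult_le_compat_r.
    pose proof (vnorm_ge0 _ (vsub x1 x2)); pose proof (vnorm_ge0 _ (vsub y1 y2)); lra. apply Rmax_l. }
  assert (Hrho' : K' / (a - eta) + K' / (eta - b) < 1).
  { unfold K', Rmax. destruct (Rle_dec K 0). unfold Rdiv; rewrite !Rmult_0_l; lra. auto. }
  destruct (existence n m A B a b K' f g zeta Hcadlag Hba HA HB (Hlip _ _ _ f Hflip) (Hlip _ _ _ g Hglip)
     x0 y0 xh yh Horbit eta Heta Hbeta HK' Hrho' u0) as [u [v [Hin HS]]].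
  exists u, v. split; [exact Hin|]. split; [exact HS|].
  intros u' v' Hin' HS'.
  exact (uniq n m A B a b K' f g zeta Hcadlag Hba HA HB (Hlip _ _ _ f Hflip) (Hlip _ _ _ g Hglip)
     xh yh eta Heta Hbeta HK' Hrho' u0 u v u' v' Hin Hin' HS HS').
Qed.
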